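(* Let $L$ be a normalised lattice in $\mathrm{Osc}_1$, $\lambda=\lambda(L)$, $r=r(L)$, and let $s_0\in\mathbb N_{>0}$ be associated with the type of $L$ as follows: if $L$ is of type $L^1_{r_0}$, $s_0=r/r_0$; if $L$ is of type $L^{q,+}_r$ ($q\in\{2,3,4\}$), $s_0=1$ when $q=4$ and $r\in 2+4\mathbb Z$, and $s_0=q_0$ otherwise; if $L$ is of type $L^q_r$ with $q\in\{2,3,4,6\}$, $s_0=q_0$ when $q=4$ and $r\in2+4\mathbb Z$, and $s_0=1$ otherwise (here $q_0\in\{2,3\}$ is the smallest prime factor of $q$). Put $u=1/(s_0r\lambda)$. Then there is an inner automorphism $F$ of $\mathrm{Osc}_1$ with $F_u(L)=F(L)$.
   Context: $\mathrm{Osc}_1$ is the set $\mathbb C\times\mathbb R\times\mathbb R$ with multiplication $(\xi_1,z_1,t_1)(\xi_2,z_2,t_2)=(\xi_1+e^{it_1}\xi_2,\ z_1+z_2+\tfrac12\operatorname{Im}(\overline{\xi_1}e^{it_1}\xi_2),\ t_1+t_2)$; $H=\mathbb C\times\mathbb R\times\{0\}$ is the Heisenberg subgroup, with centre $Z(H)=\{0\}\times\mathbb R\times\{0\}$. For $u\in\mathbb R$, $F_u(\xi,z,t)=(\xi,z+ut,t)$ is an automorphism. For a lattice $L$ (discrete cocompact subgroup): $L\cap H$ is isomorphic to a discrete Heisenberg group $H_1^r(\mathbb Z)=\langle\alpha,\beta,\gamma\mid\alpha\beta\alpha^{-1}\beta^{-1}=\gamma^r,\gamma\text{ central}\rangle$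 for a unique $r=:r(L)$; the projection of $L$ to the last factor $\mathbb R$ is generated by a unique $\lambda(L)\in\pi\mathbb N_{>0}\cup\bigcup_{\lambda_0\in\{\pi/3,\pi/2,2\pi/3\}}(\lambda_0+2\pi\mathbb Z)$; $\operatorname{ord}(\lambda)$ is the least $q\ge1$ with $q\lambda\in2\pi\mathbb Z$. $L$ is normalised if the projection of $L\cap H$ to $H/Z(H)\cong\mathbb C\cong\mathbb R^2$ is a lattice of covolume one (equivalently $[L\cap H,L\cap H]$ is generated by $(0,1,0)$). As an abstract group $L$ is isomorphic to exactly one of the following groups, called its type: $H_1^r(\mathbb Z)\rtimes_S\mathbb Z\delta$ with $\delta x\delta^{-1}=S(x)$, $S(\gamma)=\gamma$ and $(S(\alpha),S(\beta))$ given by: $L^1_r$: $(\alpha,\beta)$; $L^2_r$: $(\alpha^{-1},\beta^{-1})$; $L^{2,+}_r$ ($r$ even): $(\alpha^{-1}\gamma,\beta^{-1}\gamma^{-1})$; $L^3_r$: $(\beta\gamma^r,\beta^{-1}\alpha^{-1})$; $L^{3,+}_r$ ($3\mid r$): $(\beta\gamma^{r-1},\beta^{-1}\alpha^{-1}\gamma)$; $L^4_r$: $(\beta,\alpha^{-1})$; $L^{4,+}_r$ ($r$ even): $(\beta\gamma,\alpha^{-1})$; $L^6_r$: $(\alpha\beta,\alpha^{-1})$. For types other than $L^1$ the index $r$ equals $r(L)$ and $q=\operatorname{ord}(\lambda(L))$ equals the superscript. *)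

(* Defs.v *)
From Stdlib Require Import Reals ZArith.
Open Scope R_scope.

(* Osc_1 = C x R x R, with xi = ox + i oy. *)
Record osc := mkOsc { ox : R; oy : R; oz : R; ot : R }.

(* (xi1,z1,t1)(xi2,z2,t2) = (xi1 + e^{it1} xi2, z1+z2+1/2 Im(conj xi1 e^{it1} xi2), t1+t2) *)
Definition omul (g h : osc) : osc :=
  let wx := cos (ot g) * ox h - sin (ot g) * oy h in
  let wy := sin (ot g) * ox h + cos (ot g) * oy h in
  mkOsc (ox g + wx) (oy g + wy)
        (oz g + oz h + / 2 * (ox g * wy - oy g * wx)) (ot g + ot h).

Definition oone : osc := mkOsc 0 0 0 0.

Definition oinv (g : osc) : osc :=
  mkOsc (- (cos (ot g) * ox g + sin (ot g) * oy g))
        (- (- sin (ot g) * ox g + cos (ot g) * oy g))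
        (- oz g) (- ot g).

Fixpoint onpow (g : osc) (n : nat) : osc :=
  match n with O => oone | S n => omul g (onpow g n) end.

Definition ozpow (g : osc) (k : Z) : osc :=
  match k with
  | Z0 => oone
  | Zpos p => onpow g (Pos.to_nat p)
  | Zneg p => onpow (oinv g) (Pos.to_nat p)
  end.

Definition commg (g h : osc) : osc := omul (omul g h) (omul (oinv g) (oinv h)).
Definition conjg (g x : osc) : osc := omul (omul g x) (oinv g).

Definition Fu (u : R) (g : osc) : osc := mkOsc (ox g) (oy g) (oz g + u * ot g) (ot g).

Definition onorm (g : osc) : R :=
  sqrt (ox g ^ 2 + oy g ^ 2 + oz g ^ 2 + ot g ^ 2).

Definition is_subgroup (L : osc -> Prop) : Prop :=
  L oone /\ (forall g h, L g -> L h -> L (omul g h)) /\ (forall g, L g -> L (oinv g)).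
Definition is_discrete (L : osc -> Prop) : Prop :=
  exists eps, 0 < eps /\ forall g, L g -> onorm g < eps -> g = oone.
(* G = K L with K bounded (equivalently compact closure) *)
Definition is_cocompact (L : osc -> Prop) : Prop :=
  exists M, forall g, exists k l, L l /\ onorm k <= M /\ g = omul k l.
Definition is_lattice (L : osc -> Prop) : Prop :=
  is_subgroup L /\ is_discrete L /\ is_cocompact L.

Definition LH (L : osc -> Prop) (g : osc) : Prop := L g /\ ot g = 0.

Inductive comm_gen (A : osc -> Prop) : osc -> Prop :=
| cg_one : comm_gen A oone
| cg_comm : forall g h x, A g -> A h -> comm_gen A x -> comm_gen A (omul (commg g h) x).

Definition normalised (L : osc -> Prop) : Prop :=
  forall x, comm_gen (LH L) x <-> exists n : Z, x = mkOsc 0 0 (IZR n) 0.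

Definition hword (a b c : osc) (p : Z * Z * Z) : osc :=
  match p with (i, j, k) => omul (ozpow a i) (omul (ozpow b j) (ozpow c k)) end.

(* L cap H is isomorphic to H_1^r(Z): generators satisfying the relations
   with unique normal forms a^i b^j c^k (von Dyck + normal form in H_1^r(Z)). *)
Definition heis_index (L : osc -> Prop) (r : nat) : Prop :=
  (0 < r)%nat /\
  exists a b c, LH L a /\ LH L b /\ LH L c /\
    omul c a = omul a c /\ omul c b = omul b c /\
    commg a b = ozpow c (Z.of_nat r) /\
    forall x, LH L x <-> exists! p : Z * Z * Z, x = hword a b c p.

Inductive osc_type :=
| T1 (r0 : nat) | T2 | T2p | T3 | T3p | T4 | T4p | T6.

(* index of the Heisenberg part of the type (r0 for L^1_{r0}, else r = r(L)) *)
Definition type_index (T : osc_type) (r : nat) : nat :=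
  match T with T1 r0 => r0 | _ => r end.

Definition type_cond (T : osc_type) (n : nat) : Prop :=
  match T with
  | T2p | T4p => Nat.even n = true
  | T3p => Nat.modulo n 3 = 0%nat
  | _ => True
  end.

Definition S_images (T : osc_type) (n : nat) (a b c : osc) : osc * osc :=
  let N := Z.of_nat n in
  match T with
  | T1 _ => (a, b)
  | T2 => (oinv a, oinv b)
  | T2p => (omul (oinv a) c, omul (oinv b) (oinv c))
  | T3 => (omul b (ozpow c N), omul (oinv b) (oinv a))
  | T3p => (omul b (ozpow c (N - 1)), omul (oinv b) (omul (oinv a) c))
  | T4 => (b, oinv a)
  | T4p => (omul b c, oinv a)
  | T6 => (omul a b, oinv a)
  end.

(* L is isomorphic (as abstract group) to H_n(Z) x|_S Z delta, expressed via
   images a,b,c,d of alpha,beta,gamma,delta satisfying the defining relations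
   and giving unique normal forms a^i b^j c^k d^m. *)
Definition has_type (L : osc -> Prop) (T : osc_type) (r : nat) : Prop :=
  let n := type_index T r in
  (0 < n)%nat /\ type_cond T n /\
  exists a b c d, L a /\ L b /\ L c /\ L d /\
    omul c a = omul a c /\ omul c b = omul b c /\ omul c d = omul d c /\
    commg a b = ozpow c (Z.of_nat n) /\
    conjg d a = fst (S_images T n a b c) /\
    conjg d b = snd (S_images T n a b c) /\
    forall x, L x <-> exists! p : Z * Z * Z * Z,
      x = match p with (i, j, k, m) => omul (hword a b c (i, j, k)) (ozpow d m) end.

Definition s0 (T : osc_type) (r : nat) : R :=
  match T with
  | T1 r0 => INR r / INR r0
  | T2p => 2
  | T3p => 3
  | T4p => if Nat.eqb (Nat.modulo r 4) 2 then 1 else 2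
  | T2 | T3 | T6 => 1
  | T4 => if Nat.eqb (Nat.modulo r 4) 2 then 2 else 1
  end.

(* Main.v *)
Require Import Defs.
From Stdlib Require Import Reals ZArith Lra Lia Psatz Arith.
Open Scope R_scope.

Lemma osc_eq : forall x y z t x' y' z' t', x = x' -> y = y' -> z = z' -> t = t' ->
  mkOsc x y z t = mkOsc x' y' z' t'.
Proof. intros; subst; reflexivity. Qed.

Lemma eq_by_factor (P Q K X : R) : K = 0 -> P - Q = K * X -> P = Q.
Proof. intros HK H. rewrite HK in H. lra. Qed.

Lemma sc1 t : sin t * sin t + cos t * cos t - 1 = 0.
Proof. pose proof (sin2_cos2 t) as E. unfold Rsqr in E. lra. Qed.

Lemma omul_assoc g h k : omul (omul g h) k = omul g (omul h k).
Proof.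
  destruct g as [g1 g2 gz gt], h as [h1 h2 hz ht], k as [k1 k2 kz kt].
  unfold omul; simpl. rewrite cos_plus, sin_plus.
  apply osc_eq; try ring.
  apply (eq_by_factor _ _ _ (/2 * (h1 * cos ht * k2 + h1 * sin ht * k1 - h2 * cos ht * k1 + h2 * sin ht * k2)) (sc1 gt)).
  ring.
Qed.

Lemma omul_oone_l g : omul oone g = g.
Proof. destruct g; unfold omul, oone; simpl. rewrite cos_0, sin_0. apply osc_eq; ring. Qed.
Lemma omul_oone_r g : omul g oone = g.
Proof. destruct g; unfold omul, oone; simpl. apply osc_eq; ring. Qed.

Lemma omul_oinv_l g : omul (oinv g) g = oone.
Proof.
  destruct g as [g1 g2 gz gt]; unfold omul, oinv, oone; simpl.
  rewrite cos_neg, sin_neg.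
  apply osc_eq; first [ring | apply (eq_by_factor _ _ _ (-g1) (sc1 gt)); ring
   | apply (eq_by_factor _ _ _ (-g2) (sc1 gt)); ring].
Qed.
Lemma omul_oinv_r g : omul g (oinv g) = oone.
Proof.
  destruct g as [g1 g2 gz gt]; unfold omul, oinv, oone; simpl.
  apply osc_eq; first [ring | apply (eq_by_factor _ _ _ (-g1) (sc1 gt)); ring
   | apply (eq_by_factor _ _ _ (-g2) (sc1 gt)); ring].
Qed.

Lemma oinv_unique x y : omul x y = oone -> y = oinv x.
Proof.
  intro H. rewrite <- (omul_oone_l y), <- (omul_oinv_l x), omul_assoc, H, omul_oone_r. reflexivity.
Qed.

Lemma oinv_omul x y : oinv (omul x y) = omul (oinv y) (oinv x).
Proof.
  symmetry. apply oinv_unique.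
  rewrite omul_assoc, <- (omul_assoc y), omul_oinv_r, omul_oone_l, omul_oinv_r. reflexivity.
Qed.

Lemma oinv_oinv x : oinv (oinv x) = x.
Proof. symmetry. apply oinv_unique. apply omul_oinv_l. Qed.

Lemma oinv_oone : oinv oone = oone.
Proof. symmetry. apply oinv_unique. apply omul_oone_l. Qed.

Lemma conjg_mul g x y : conjg g (omul x y) = omul (conjg g x) (conjg g y).
Proof.
  unfold conjg. rewrite !omul_assoc. f_equal. f_equal.
  rewrite <- (omul_assoc (oinv g)), omul_oinv_l, omul_oone_l. reflexivity.
Qed.

Lemma conjg_one g : conjg g oone = oone.
Proof. unfold conjg. rewrite omul_oone_r, omul_oinv_r. reflexivity. Qed.

Lemma conjg_inv g x : conjg g (oinv x) = oinv (conjg g x).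
Proof.
  apply oinv_unique. rewrite <- conjg_mul, omul_oinv_r. apply conjg_one.
Qed.

Lemma Fu_mul u x y : Fu u (omul x y) = omul (Fu u x) (Fu u y).
Proof. destruct x, y; unfold Fu, omul; simpl. apply osc_eq; ring. Qed.
Lemma Fu_one u : Fu u oone = oone.
Proof. unfold Fu, oone; simpl. apply osc_eq; ring. Qed.
Lemma Fu_inv u x : Fu u (oinv x) = oinv (Fu u x).
Proof. destruct x; unfold Fu, oinv; simpl. apply osc_eq; ring. Qed.

Section Hom.
Variable f : osc -> osc.
Hypothesis fmul : forall x y, f (omul x y) = omul (f x) (f y).
Hypothesis fone : f oone = oone.
Hypothesis finv : forall x, f (oinv x) = oinv (f x).
Lemma hom_onpow x n : f (onpow x n) = onpow (f x) n.
Proof. induction n; simpl; [exact fone| rewrite fmul, IHn; reflexivity]. Qed.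
Lemma hom_ozpow x k : f (ozpow x k) = ozpow (f x) k.
Proof. destruct k; simpl; [exact fone | apply hom_onpow | rewrite hom_onpow, finv; reflexivity]. Qed.
End Hom.

Lemma conjg_ozpow g x k : conjg g (ozpow x k) = ozpow (conjg g x) k.
Proof. apply hom_ozpow; [apply conjg_mul|apply conjg_one|apply conjg_inv]. Qed.
Lemma Fu_ozpow u x k : Fu u (ozpow x k) = ozpow (Fu u x) k.
Proof. apply hom_ozpow; [apply Fu_mul|apply Fu_one|apply Fu_inv]. Qed.

Definition closed (P : osc -> Prop) := P oone /\ (forall x y, P x -> P y -> P (omul x y)) /\ (forall x, P x -> P (oinv x)).

Lemma closed_ozpow P x k : closed P -> P x -> P (ozpow x k).
Proof.
  intros [H1 [H2 H3]] Hx. assert (forall y n, P y -> P (onpow y n)) as Hn.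
  { intros y n Hy; induction n; simpl; auto. }
  destruct k; simpl; auto.
Qed.

Lemma ot_omul x y : ot (omul x y) = ot x + ot y.
Proof. reflexivity. Qed.
Lemma ot_onpow x n : ot (onpow x n) = INR n * ot x.
Proof. induction n; [simpl; unfold oone; simpl; ring|]. rewrite S_INR. cbn [onpow]. rewrite ot_omul, IHn. ring. Qed.
Lemma ot_ozpow x k : ot (ozpow x k) = IZR k * ot x.
Proof.
  destruct k; simpl.
  - unfold oone; simpl; ring.
  - rewrite ot_onpow, INR_IPR. reflexivity.
  - rewrite ot_onpow, INR_IPR. change (IZR (Z.neg p)) with (- IPR p). simpl. ring.
Qed.
Lemma ot_oinv x : ot (oinv x) = - ot x.
Proof. reflexivity. Qed.

Definition rt (x : osc) := cos (ot x) = 1 /\ sin (ot x) = 0.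

Lemma onpow_rt x n : rt x -> onpow x n = mkOsc (INR n * ox x) (INR n * oy x) (INR n * oz x) (INR n * ot x).
Proof.
  intros [Hc Hs]. induction n.
  - simpl; unfold oone; apply osc_eq; ring.
  - rewrite S_INR. cbn [onpow]. rewrite IHn. unfold omul; simpl. rewrite Hc, Hs. apply osc_eq; ring.
Qed.

Lemma oinv_rt x : rt x -> oinv x = mkOsc (- ox x) (- oy x) (- oz x) (- ot x).
Proof. intros [Hc Hs]. unfold oinv. rewrite Hc, Hs. apply osc_eq; ring. Qed.

Lemma rt_inv x : rt x -> rt (oinv x).
Proof. intros [Hc Hs]; split; simpl; rewrite ?cos_neg, ?sin_neg, ?Hc, ?Hs; lra. Qed.

Lemma ozpow_rt x k : rt x -> ozpow x k = mkOsc (IZR k * ox x) (IZR k * oy x) (IZR k * oz x) (IZR k * ot x).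
Proof.
  intros H. destruct k; simpl.
  - unfold oone; apply osc_eq; ring.
  - rewrite onpow_rt by exact H. rewrite INR_IPR. reflexivity.
  - rewrite onpow_rt by (apply rt_inv; exact H). rewrite oinv_rt by exact H. simpl.
    rewrite INR_IPR. change (IZR (Z.neg p)) with (- IPR p). apply osc_eq; ring.
Qed.

Lemma omul_rt x y : rt x -> omul x y = mkOsc (ox x + ox y) (oy x + oy y) (oz x + oz y + /2 * (ox x * oy y - oy x * ox y)) (ot x + ot y).
Proof. intros [Hc Hs]. unfold omul. rewrite Hc, Hs. apply osc_eq; ring. Qed.

Lemma rt_mul x y : rt x -> rt y -> rt (omul x y).
Proof. intros [Hc Hs] [Hc' Hs']. split; simpl; rewrite ?cos_plus, ?sin_plus, Hc, Hs, Hc', Hs'; ring. Qed.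

Lemma rt_H x : ot x = 0 -> rt x.
Proof. intro H; split; rewrite H; [apply cos_0|apply sin_0]. Qed.

Definition Zc (w : R) := mkOsc 0 0 w 0.
Definition shiftz (x : osc) (w : R) := mkOsc (ox x) (oy x) (oz x + w) (ot x).

Lemma omul_Zc_r x w : omul x (Zc w) = shiftz x w.
Proof. destruct x; unfold omul, Zc, shiftz; simpl. apply osc_eq; ring. Qed.
Lemma omul_Zc_l x w : omul (Zc w) x = shiftz x w.
Proof. destruct x; unfold omul, Zc, shiftz; simpl. rewrite cos_0, sin_0. apply osc_eq; ring. Qed.
Lemma ozpow_Zc w k : ozpow (Zc w) k = Zc (IZR k * w).
Proof. rewrite ozpow_rt by (apply rt_H; reflexivity). unfold Zc; simpl. apply osc_eq; ring. Qed.

Lemma closed_img_conj L g : is_subgroup L -> closed (fun y => exists x, L x /\ y = conjg g x).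
Proof.
  intros [H1 [H2 H3]]. split; [|split].
  - exists oone; split; auto; rewrite conjg_one; reflexivity.
  - intros x y [x' [Hx ->]] [y' [Hy ->]]. exists (omul x' y'); split; auto. rewrite conjg_mul; reflexivity.
  - intros x [x' [Hx ->]]. exists (oinv x'); split; auto. rewrite conjg_inv; reflexivity.
Qed.
Lemma closed_img_Fu L u : is_subgroup L -> closed (fun y => exists x, L x /\ y = Fu u x).
Proof.
  intros [H1 [H2 H3]]. split; [|split].
  - exists oone; split; auto; rewrite Fu_one; reflexivity.
  - intros x y [x' [Hx ->]] [y' [Hy ->]]. exists (omul x' y'); split; auto. rewrite Fu_mul; reflexivity.
  - intros x [x' [Hx ->]]. exists (oinv x'); split; auto. rewrite Fu_inv; reflexivity.
Qed.

Lemma hom_hword (f : osc -> osc) a b c d i j k m :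
  (forall x y, f (omul x y) = omul (f x) (f y)) ->
  (forall x k, f (ozpow x k) = ozpow (f x) k) ->
  f (omul (hword a b c (i,j,k)) (ozpow d m)) =
  omul (omul (ozpow (f a) i) (omul (ozpow (f b) j) (ozpow (f c) k))) (ozpow (f d) m).
Proof. intros Hm Hp. unfold hword. rewrite !Hm, !Hp. reflexivity. Qed.

Lemma closed_hword (P : osc -> Prop) a b c d i j k m : closed P -> P a -> P b -> P c -> P d ->
  P (omul (omul (ozpow a i) (omul (ozpow b j) (ozpow c k))) (ozpow d m)).
Proof.
  intros HP Ha Hb Hc Hd. pose proof HP as [_ [Hm _]].
  repeat apply Hm; apply closed_ozpow; auto.
Qed.

Lemma gen_lemma (L : osc -> Prop) a b c d g u :
  is_subgroup L ->
  (forall x, L x -> exists i j k m, x = omul (hword a b c (i,j,k)) (ozpow d m)) ->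
  (forall x, x = a \/ x = b \/ x = c \/ x = d ->
     (exists y, L y /\ conjg g x = Fu u y) /\ (exists y, L y /\ Fu u x = conjg g y)) ->
  forall y, (exists x, L x /\ y = Fu u x) <-> (exists x, L x /\ y = conjg g x).
Proof.
  intros HL Hnf Hg y.
  pose proof (closed_img_conj L g HL) as C1. pose proof (closed_img_Fu L u HL) as C2.
  split.
  - intros [x [Hx ->]]. destruct (Hnf x Hx) as [i [j [k [m ->]]]].
    rewrite (hom_hword (Fu u)) by (apply Fu_mul || apply Fu_ozpow).
    apply closed_hword; [exact C1| | | |].
    + exact (proj2 (Hg a ltac:(tauto))).
    + exact (proj2 (Hg b ltac:(tauto))).
    + exact (proj2 (Hg c ltac:(tauto))).
    + exact (proj2 (Hg d ltac:(tauto))).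
  - intros [x [Hx ->]]. destruct (Hnf x Hx) as [i [j [k [m ->]]]].
    rewrite (hom_hword (conjg g)) by (apply conjg_mul || apply conjg_ozpow).
    apply closed_hword; [exact C2| | | |].
    + destruct (proj1 (Hg a ltac:(tauto))) as [y' [Hy' E]]; exists y'; split; auto.
    + destruct (proj1 (Hg b ltac:(tauto))) as [y' [Hy' E]]; exists y'; split; auto.
    + destruct (proj1 (Hg c ltac:(tauto))) as [y' [Hy' E]]; exists y'; split; auto.
    + destruct (proj1 (Hg d ltac:(tauto))) as [y' [Hy' E]]; exists y'; split; auto.
Qed.

Lemma commg_H x y : ot x = 0 -> ot y = 0 -> commg x y = Zc (ox x * oy y - oy x * ox y).
Proof.
  destruct x as [x1 x2 xz xt], y as [y1 y2 yz yt]; simpl; intros -> ->.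
  unfold commg, omul, oinv, Zc; simpl.
  repeat rewrite ?Rplus_0_r, ?Ropp_0, ?cos_0, ?sin_0.
  apply osc_eq; field.
Qed.

Lemma ozpow_H x k : ot x = 0 -> ozpow x k = mkOsc (IZR k * ox x) (IZR k * oy x) (IZR k * oz x) 0.
Proof. intro H. rewrite ozpow_rt by (apply rt_H; exact H). rewrite H. apply osc_eq; ring. Qed.

Lemma hword_H a b c i j k : ot a = 0 -> ot b = 0 -> ot c = 0 ->
  ox (hword a b c (i,j,k)) = IZR i * ox a + IZR j * ox b + IZR k * ox c /\
  oy (hword a b c (i,j,k)) = IZR i * oy a + IZR j * oy b + IZR k * oy c /\
  ot (hword a b c (i,j,k)) = 0.
Proof.
  intros Ha Hb Hc. unfold hword. rewrite (ozpow_H a), (ozpow_H b), (ozpow_H c) by assumption.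
  rewrite !omul_rt by (apply rt_H; reflexivity). simpl. repeat split; ring.
Qed.

Lemma IZR_inj_eq (m n : Z) : IZR m = IZR n -> m = n.
Proof. apply eq_IZR. Qed.

Lemma struct_G L a b c n :
  normalised L -> (0 < n)%nat -> LH L a -> LH L b -> LH L c ->
  commg a b = ozpow c (Z.of_nat n) ->
  (forall x, LH L x -> exists p, x = hword a b c p) ->
  ((ox a * oy b - oy a * ox b) = 1 \/ (ox a * oy b - oy a * ox b) = -1) /\
  c = mkOsc 0 0 ((ox a * oy b - oy a * ox b) / INR n) 0.
Proof.
  intros Hn Hpos [La Ta] [Lb Tb] [Lc Tc] Hcomm Hnf.
  set (I := ox a * oy b - oy a * ox b).
  rewrite commg_H in Hcomm by assumption. rewrite ozpow_H in Hcomm by assumption.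
  unfold Zc in Hcomm. injection Hcomm as E1 E2 E3.
  rewrite <- INR_IZR_INZ in E1, E2, E3.
  assert (Hn0 : INR n <> 0) by (apply not_0_INR; lia).
  assert (c1 : ox c = 0). { apply (Rmult_eq_reg_l (INR n)); [lra|auto]. }
  assert (c2 : oy c = 0). { apply (Rmult_eq_reg_l (INR n)); [lra|auto]. }
  assert (HG : forall x, comm_gen (LH L) x -> exists K : Z, x = Zc (IZR K * I)).
  { intros x Hx. induction Hx as [| g h x Hg Hh _ [K ->]].
    - exists 0%Z. unfold oone, Zc. apply osc_eq; ring.
    - destruct (Hnf g Hg) as [[[i j] k] ->]. destruct (Hnf h Hh) as [[[i' j'] k'] ->].
      destruct (hword_H a b c i j k Ta Tb Tc) as [X1 [Y1 T1]].
      destruct (hword_H a b c i' j' k' Ta Tb Tc) as [X2 [Y2 T2]].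
      rewrite commg_H by assumption. rewrite omul_Zc_l.
      exists (i * j' - j * i' + K)%Z. rewrite X1, Y1, X2, Y2, c1, c2. unfold shiftz, Zc; simpl. rewrite plus_IZR, minus_IZR, !mult_IZR. unfold I.
      apply osc_eq; ring. }
  destruct (HG (mkOsc 0 0 (IZR 1) 0)) as [K HK]. { apply Hn. exists 1%Z. reflexivity. }
  destruct (proj1 (Hn (commg a b))) as [N HN].
  { replace (commg a b) with (omul (commg a b) oone) by apply omul_oone_r.
    apply cg_comm; [split; auto|split; auto|constructor]. }
  rewrite commg_H in HN by assumption. unfold Zc in HN, HK. injection HN as HN. injection HK as HK.
  fold I in HN, E3. clearbody I.
  assert (KN : (K * N = 1)%Z). { apply eq_IZR. rewrite mult_IZR, <- HN. symmetry; exact HK. }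
  split.
  - destruct (Z.eq_mul_1 N K ltac:(lia)) as [-> | ->]; [left|right]; rewrite HN; reflexivity.
  - destruct c as [c1' c2' cz ct]; simpl in *. subst. apply osc_eq; auto. field_simplify_eq; auto.
Qed.

Lemma conjg_oone x : conjg oone x = x.
Proof. unfold conjg. rewrite oinv_oone, omul_oone_l, omul_oone_r. reflexivity. Qed.

Lemma Fu_shift u x : Fu u x = shiftz x (u * ot x).
Proof. reflexivity. Qed.

Lemma shiftz_shiftz x v w : shiftz (shiftz x v) w = shiftz x (v + w).
Proof. unfold shiftz; simpl. apply osc_eq; ring. Qed.
Lemma shiftz_0 x : shiftz x 0 = x.
Proof. destruct x; unfold shiftz; simpl. apply osc_eq; ring. Qed.

Definition lam_hyp (L : osc -> Prop) lam :=
  forall t, (exists x, L x /\ ot x = t) <-> exists n : Z, t = IZR n * lam.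

Lemma lam_of L lam x : lam_hyp L lam -> L x -> exists n : Z, ot x = IZR n * lam.
Proof. intros H Hx. apply H. exists x; auto. Qed.

Lemma heis_struct L r : normalised L -> heis_index L r ->
  exists c0 e, L c0 /\ (e = 1 \/ e = -1) /\ c0 = Zc (e / INR r).
Proof.
  intros Hn [Hr [a0 [b0 [c0 [Ha [Hb [Hc [_ [_ [Hcomm Hnf]]]]]]]]]].
  destruct (struct_G L a0 b0 c0 r Hn Hr Ha Hb Hc Hcomm) as [HI Hc0].
  { intros x Hx. destruct (proj1 (Hnf x) Hx) as [p [Hp _]]. exists p; exact Hp. }
  exists c0, (ox a0 * oy b0 - oy a0 * ox b0). split; [apply Hc|]. split; auto.
Qed.

Lemma simple_case L r lam T :
  is_lattice L -> normalised L -> heis_index L r -> 0 < lam -> lam_hyp L lam -> s0 T r = 1 ->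
  exists g : osc, forall y,
    (exists x, L x /\ y = Fu (1 / (s0 T r * INR r * lam)) x) <->
    (exists x, L x /\ y = conjg g x).
Proof.
  intros [[HL1 [HL2 HL3]] _] Hn Hh Hlam Hl Hs.
  pose proof Hh as [Hr _].
  destruct (heis_struct L r Hn Hh) as [c0 [e [Lc0 [He Ec0]]]].
  rewrite Hs. exists oone. intros y.
  assert (Hr0 : INR r <> 0) by (apply not_0_INR; lia).
  assert (key : forall x, L x -> exists k : Z, Fu (1 / (1 * INR r * lam)) x = omul x (ozpow c0 k)).
  { intros x Hx. destruct (lam_of L lam x Hl Hx) as [n Hn'].
    destruct He as [-> | ->]; [exists n | exists (- n)%Z];
    rewrite Ec0, ozpow_Zc, omul_Zc_r, Fu_shift, Hn'; f_equal; rewrite ?opp_IZR; field; lra. }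
  split.
  - intros [x [Hx ->]]. destruct (key x Hx) as [k ->]. exists (omul x (ozpow c0 k)).
    split; [apply HL2; auto; apply closed_ozpow; auto; split; auto|]. rewrite conjg_oone; reflexivity.
  - intros [x [Hx ->]]. rewrite conjg_oone. destruct (key x Hx) as [k Hk].
    exists (omul x (ozpow c0 (- k))). split.
    + apply HL2; auto; apply closed_ozpow; auto; split; auto.
    + rewrite Ec0 in *. rewrite ozpow_Zc, omul_Zc_r in *. rewrite !Fu_shift in *.
      unfold shiftz in *; simpl in *. injection Hk as Hk. rewrite opp_IZR. destruct x; simpl in *.
      apply osc_eq; lra.
Qed.

Lemma ot_conjg g x : ot (conjg g x) = ot x.
Proof. unfold conjg. rewrite !ot_omul, ot_oinv. ring. Qed.

Lemma ot_commg g x : ot (commg g x) = 0.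
Proof. unfold commg. rewrite !ot_omul, !ot_oinv. ring. Qed.

Lemma ot_d_lam L lam a b c d :
  lam_hyp L lam -> 0 < lam -> L d -> ot a = 0 -> ot b = 0 -> ot c = 0 ->
  (forall x, L x -> exists i j k m, x = omul (hword a b c (i,j,k)) (ozpow d m)) ->
  ot d = lam \/ ot d = - lam.
Proof.
  intros Hl Hlam Ld Ta Tb Tc Hnf.
  destruct (proj2 (Hl lam)) as [x [Lx Tx]]. { exists 1%Z. ring. }
  destruct (Hnf x Lx) as [i [j [k [m ->]]]].
  destruct (hword_H a b c i j k Ta Tb Tc) as [_ [_ T0]].
  rewrite ot_omul, T0, ot_ozpow in Tx.
  destruct (lam_of L lam d Hl Ld) as [n Hn]. rewrite Hn in Tx.
  assert (E : (m * n = 1)%Z). { apply eq_IZR. rewrite mult_IZR. apply (Rmult_eq_reg_r lam); lra. }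
  destruct (Z.eq_mul_1 n m ltac:(lia)) as [-> | ->]; [left|right]; rewrite Hn; simpl; lra.
Qed.

Lemma LH_nf L a b c d :
  ot a = 0 -> ot b = 0 -> ot c = 0 -> ot d <> 0 ->
  (forall x, L x -> exists i j k m, x = omul (hword a b c (i,j,k)) (ozpow d m)) ->
  forall x, LH L x -> exists p, x = hword a b c p.
Proof.
  intros Ta Tb Tc Td Hnf x [Lx Tx].
  destruct (Hnf x Lx) as [i [j [k [m ->]]]].
  destruct (hword_H a b c i j k Ta Tb Tc) as [_ [_ T0]].
  rewrite ot_omul, T0, ot_ozpow in Tx.
  assert (m = 0%Z). { apply eq_IZR. apply (Rmult_eq_reg_r (ot d)); auto. lra. }
  subst m. exists (i,j,k). simpl. apply omul_oone_r.
Qed.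

Lemma nf_of_type L T r : is_subgroup L -> has_type L T r ->
  exists a b c d, L a /\ L b /\ L c /\ L d /\
    omul c a = omul a c /\ omul c b = omul b c /\ omul c d = omul d c /\
    commg a b = ozpow c (Z.of_nat (type_index T r)) /\
    conjg d a = fst (S_images T (type_index T r) a b c) /\
    conjg d b = snd (S_images T (type_index T r) a b c) /\
    (forall x, L x -> exists i j k m, x = omul (hword a b c (i,j,k)) (ozpow d m)) /\
    (forall i j k m i' j' k' m', omul (hword a b c (i,j,k)) (ozpow d m) = omul (hword a b c (i',j',k')) (ozpow d m') ->
       i = i' /\ j = j' /\ k = k' /\ m = m').
Proof.
  intros HL [Hn [Hc [a [b [c [d [La [Lb [Lc [Ld [E1 [E2 [E3 [E4 [E5 [E6 Hnf]]]]]]]]]]]]]]]].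
  assert (U : forall i j k m i' j' k' m', omul (hword a b c (i,j,k)) (ozpow d m) = omul (hword a b c (i',j',k')) (ozpow d m') ->
       i = i' /\ j = j' /\ k = k' /\ m = m').
  { intros i j k m i' j' k' m' H.
    assert (Lx : L (omul (hword a b c (i,j,k)) (ozpow d m))).
    { destruct HL as [H1 [H2 H3]]. unfold hword. apply closed_hword; auto. split; auto. }
    destruct (proj1 (Hnf _) Lx) as [p [_ Hu]].
    pose proof (Hu (i,j,k,m) eq_refl) as U1. pose proof (Hu (i',j',k',m') H) as U2.
    rewrite U2 in U1. injection U1; intros; subst; auto. }
  exists a, b, c, d. refine (conj La (conj Lb (conj Lc (conj Ld (conj E1 (conj E2 (conj E3 (conj E4 (conj E5 (conj E6 (conj _ U))))))))))).
  intros x Hx. destruct (proj1 (Hnf x) Hx) as [[[[i j] k] m] [H _]]. exists i, j, k, m; exact H.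
Qed.

Lemma nonT1_ot T n a b c d : (forall r0, T <> T1 r0) -> (0 < n)%nat ->
  commg a b = ozpow c (Z.of_nat n) ->
  conjg d a = fst (S_images T n a b c) -> conjg d b = snd (S_images T n a b c) ->
  ot a = 0 /\ ot b = 0 /\ ot c = 0.
Proof.
  intros HT Hn Ec Ea Eb.
  apply (f_equal ot) in Ec. rewrite ot_commg, ot_ozpow in Ec.
  assert (Tc : ot c = 0).
  { rewrite <- INR_IZR_INZ in Ec. assert (INR n <> 0) by (apply not_0_INR; lia).
    apply (Rmult_eq_reg_l (INR n)); auto. lra. }
  apply (f_equal ot) in Ea. apply (f_equal ot) in Eb. rewrite ot_conjg in Ea, Eb.
  destruct T; [exfalso; eapply HT; reflexivity| | | | | | |]; simpl in Ea, Eb;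
  rewrite ?ot_omul, ?ot_oinv, ?ot_ozpow, ?Tc in Ea; rewrite ?ot_omul, ?ot_oinv, ?ot_ozpow, ?Tc in Eb; repeat split; auto; lra.
Qed.

Lemma conjg_H_eta e1 e2 h : ot h = 0 -> conjg (mkOsc e1 e2 0 0) h = shiftz h (e1 * oy h - e2 * ox h).
Proof.
  destruct h as [h1 h2 hz ht]; simpl; intros ->. unfold conjg, omul, oinv, shiftz; simpl.
  repeat rewrite ?Rplus_0_r, ?Rplus_0_l, ?Ropp_0, ?cos_0, ?sin_0. apply osc_eq; field.
Qed.

Lemma Fu_H u h : ot h = 0 -> Fu u h = h.
Proof. destruct h; unfold Fu; simpl; intros ->. apply osc_eq; ring. Qed.

Lemma conjg_Zc e1 e2 w : conjg (mkOsc e1 e2 0 0) (Zc w) = Zc w.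
Proof. rewrite conjg_H_eta by reflexivity. unfold shiftz, Zc; simpl. apply osc_eq; ring. Qed.

Lemma Fu_Zc u w : Fu u (Zc w) = Zc w.
Proof. apply Fu_H; reflexivity. Qed.

Lemma hard_finish L a b c d u e1 e2 cz (ka kb e k : Z) :
  is_subgroup L -> L a -> L b -> L c -> L d ->
  (forall x, L x -> exists i j k m, x = omul (hword a b c (i,j,k)) (ozpow d m)) ->
  ot a = 0 -> ot b = 0 -> c = Zc cz ->
  e1 * oy a - e2 * ox a = IZR ka * cz ->
  e1 * oy b - e2 * ox b = IZR kb * cz ->
  conjg (mkOsc e1 e2 0 0) d = omul (omul (ozpow a e) (ozpow c k)) (Fu u d) ->
  forall y, (exists x, L x /\ y = Fu u x) <-> (exists x, L x /\ y = conjg (mkOsc e1 e2 0 0) x).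
Proof.
  intros HL La Lb Lc Ld Hnf Ta Tb Ec Ka Kb Kd.
  set (g := mkOsc e1 e2 0 0) in *.
  pose proof HL as [H1 [H2 H3]].
  assert (CL : closed L) by (split; auto).
  assert (Ca : conjg g a = omul a (ozpow c ka)).
  { unfold g. rewrite conjg_H_eta, Ec, ozpow_Zc, omul_Zc_r, Ka by exact Ta. reflexivity. }
  assert (Cb : conjg g b = omul b (ozpow c kb)).
  { unfold g. rewrite conjg_H_eta, Ec, ozpow_Zc, omul_Zc_r, Kb by exact Tb. reflexivity. }
  assert (Cc : conjg g c = c). { rewrite Ec. apply conjg_Zc. }
  assert (Ca' : conjg g (omul a (ozpow c (- ka))) = a).
  { rewrite conjg_mul, conjg_ozpow, Cc, Ca, Ec, !ozpow_Zc, !omul_Zc_r, shiftz_shiftz, opp_IZR.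
    replace (IZR ka * cz + - IZR ka * cz) with 0 by ring. apply shiftz_0. }
  assert (Cb' : conjg g (omul b (ozpow c (- kb))) = b).
  { rewrite conjg_mul, conjg_ozpow, Cc, Cb, Ec, !ozpow_Zc, !omul_Zc_r, shiftz_shiftz, opp_IZR.
    replace (IZR kb * cz + - IZR kb * cz) with 0 by ring. apply shiftz_0. }
  assert (Tc : ot c = 0) by (rewrite Ec; reflexivity).
  assert (Fa : Fu u a = a) by (apply Fu_H; exact Ta).
  assert (Fb : Fu u b = b) by (apply Fu_H; exact Tb).
  assert (Fc : Fu u c = c) by (apply Fu_H; exact Tc).
  set (w := omul (ozpow a e) (ozpow c k)) in *.
  assert (Tw : ot w = 0) by (unfold w; rewrite ot_omul, !ot_ozpow, Ta, Tc; ring).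
  set (yw := omul (ozpow (omul a (ozpow c (- ka))) e) (ozpow c k)).
  assert (Lyw : L yw).
  { unfold yw. apply H2; apply closed_ozpow; auto. apply H2; auto. apply closed_ozpow; auto. }
  assert (Cyw : conjg g yw = w).
  { unfold yw, w. rewrite conjg_mul, !conjg_ozpow, Ca', Cc. reflexivity. }
  apply (gen_lemma L a b c d g u HL Hnf).
  intros x [-> | [-> | [-> | ->]]]; split.
  - exists (omul a (ozpow c ka)). split. { apply H2; auto; apply closed_ozpow; auto. }
    rewrite Ca, Fu_H; auto. rewrite ot_omul, ot_ozpow, Ta, Tc; ring.
  - exists (omul a (ozpow c (- ka))). split. { apply H2; auto; apply closed_ozpow; auto. }
    rewrite Ca', Fa; reflexivity.
  - exists (omul b (ozpow c kb)). split. { apply H2; auto; apply closed_ozpow; auto. }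
    rewrite Cb, Fu_H; auto. rewrite ot_omul, ot_ozpow, Tb, Tc; ring.
  - exists (omul b (ozpow c (- kb))). split. { apply H2; auto; apply closed_ozpow; auto. }
    rewrite Cb', Fb; reflexivity.
  - exists c. split; auto. rewrite Cc, Fc; reflexivity.
  - exists c. split; auto. rewrite Cc, Fc; reflexivity.
  - exists (omul w d). split.
    { apply H2; auto. unfold w. apply H2; apply closed_ozpow; auto. }
    rewrite Kd, Fu_mul, (Fu_H u w Tw). reflexivity.
  - exists (omul (oinv yw) d). split. { apply H2; auto. }
    rewrite conjg_mul, conjg_inv, Cyw, Kd, <- omul_assoc, omul_oinv_l, omul_oone_l. reflexivity.
Qed.

Lemma conjg_d_H d1 d2 dz t h1 h2 hz :
  conjg (mkOsc d1 d2 dz t) (mkOsc h1 h2 hz 0) =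
  mkOsc (cos t * h1 - sin t * h2) (sin t * h1 + cos t * h2)
        (hz + d1 * (sin t * h1 + cos t * h2) - d2 * (cos t * h1 - sin t * h2)) 0.
Proof.
  unfold conjg, omul, oinv; simpl. rewrite Rplus_0_r. apply osc_eq.
  - apply (eq_by_factor _ _ _ (- d1) (sc1 t)); ring.
  - apply (eq_by_factor _ _ _ (- d2) (sc1 t)); ring.
  - apply (eq_by_factor _ _ _ (/2 * (d1 * sin t * h1 + d1 * cos t * h2 + sin t * h2 * d2 - h1 * cos t * d2)) (sc1 t)); field.
  - ring.
Qed.

Lemma conjg_eta_d e1 e2 d1 d2 dz t :
  conjg (mkOsc e1 e2 0 0) (mkOsc d1 d2 dz t) =
  mkOsc (d1 + (1 - cos t) * e1 + sin t * e2) (d2 + (1 - cos t) * e2 - sin t * e1)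
    (dz + /2 * (e1 * d2 - e2 * d1) + /2 * ((e1 + d1) * (- sin t * e1 - cos t * e2) - (e2 + d2) * (- cos t * e1 + sin t * e2))) t.
Proof.
  unfold conjg, omul, oinv; simpl. rewrite ?Rplus_0_l, ?Rplus_0_r, cos_0, sin_0. apply osc_eq; ring.
Qed.

Lemma conj_d_goal a c d u e1 e2 cz (e k : Z) :
  ot a = 0 -> c = Zc cz ->
  let C := cos (ot d) in let S := sin (ot d) in
  (1 - C) * e1 + S * e2 = IZR e * ox a ->
  (1 - C) * e2 - S * e1 = IZR e * oy a ->
  /2 * (e1 * oy d - e2 * ox d) + /2 * ((e1 + ox d) * (- S * e1 - C * e2) - (e2 + oy d) * (- C * e1 + S * e2))
    = IZR e * oz a + IZR k * cz + u * ot d + /2 * (IZR e * ox a * oy d - IZR e * oy a * ox d) ->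
  conjg (mkOsc e1 e2 0 0) d = omul (omul (ozpow a e) (ozpow c k)) (Fu u d).
Proof.
  intros Ta Ec C S X Y Z. destruct d as [d1 d2 dz t]. subst C S; simpl in *.
  rewrite conjg_eta_d, Ec, ozpow_Zc, omul_Zc_r, ozpow_H by exact Ta.
  unfold shiftz, Fu, omul; simpl. rewrite cos_0, sin_0. apply osc_eq; lra.
Qed.

Lemma nonT1_setup L r lam T :
  is_lattice L -> normalised L -> 0 < lam -> lam_hyp L lam -> has_type L T r -> (forall r0, T <> T1 r0) ->
  exists a b c d, L a /\ L b /\ L c /\ L d /\
    (forall x, L x -> exists i j k m, x = omul (hword a b c (i,j,k)) (ozpow d m)) /\
    ot a = 0 /\ ot b = 0 /\
    c = Zc ((ox a * oy b - oy a * ox b) / INR r) /\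
    ((ox a * oy b - oy a * ox b) = 1 \/ (ox a * oy b - oy a * ox b) = -1) /\
    (ot d = lam \/ ot d = - lam) /\
    conjg d a = fst (S_images T r a b c) /\ conjg d b = snd (S_images T r a b c) /\
    (0 < r)%nat /\ type_cond T r.
Proof.
  intros [HL _] Hn Hlam Hl Ht HT.
  assert (Ti : type_index T r = r) by (destruct T; [exfalso; eapply HT; reflexivity|..]; reflexivity).
  pose proof Ht as [Hpos [Hcond _]]. rewrite Ti in Hpos, Hcond.
  destruct (nf_of_type L T r HL Ht) as [a [b [c [d [La [Lb [Lc [Ld [_ [_ [_ [Ec [Ea [Eb [Hnf _]]]]]]]]]]]]]]].
  rewrite Ti in Ec, Ea, Eb.
  destruct (nonT1_ot T r a b c d HT Hpos Ec Ea Eb) as [Ta [Tb Tc]].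
  pose proof (ot_d_lam L lam a b c d Hl Hlam Ld Ta Tb Tc Hnf) as Td.
  assert (Td0 : ot d <> 0) by (destruct Td as [-> | ->]; lra).
  destruct (struct_G L a b c r Hn Hpos (conj La Ta) (conj Lb Tb) (conj Lc Tc) Ec
    (LH_nf L a b c d Ta Tb Tc Td0 Hnf)) as [HI Hc].
  exists a, b, c, d. repeat (split; auto).
Qed.

Lemma oinv_H h : ot h = 0 -> oinv h = mkOsc (- ox h) (- oy h) (- oz h) 0.
Proof. intro H. rewrite oinv_rt by (apply rt_H; exact H). rewrite H. apply osc_eq; ring. Qed.

Lemma omul_H x y : ot x = 0 -> omul x y = mkOsc (ox x + ox y) (oy x + oy y) (oz x + oz y + /2 * (ox x * oy y - oy x * ox y)) (ot y).
Proof. intro H. rewrite omul_rt by (apply rt_H; exact H). rewrite H. apply osc_eq; ring. Qed.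

Lemma rot_zero x y a1 a2 : x * a1 - y * a2 = 0 -> y * a1 + x * a2 = 0 -> a1 * a1 + a2 * a2 <> 0 -> x = 0 /\ y = 0.
Proof.
  intros H1 H2 H3.
  assert (E1 : x * (a1 * a1 + a2 * a2) = a1 * (x * a1 - y * a2) + a2 * (y * a1 + x * a2)) by ring.
  assert (E2 : y * (a1 * a1 + a2 * a2) = a1 * (y * a1 + x * a2) - a2 * (x * a1 - y * a2)) by ring.
  rewrite H1, H2 in E1, E2. split.
  - apply (Rmult_eq_reg_r (a1 * a1 + a2 * a2)); auto. lra.
  - apply (Rmult_eq_reg_r (a1 * a1 + a2 * a2)); auto. lra.
Qed.

Lemma nz_of_I a1 a2 b1 b2 : (a1 * b2 - a2 * b1 = 1 \/ a1 * b2 - a2 * b1 = -1) -> a1 * a1 + a2 * a2 <> 0.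
Proof.
  intros HI E. assert (a1 = 0 /\ a2 = 0) as [-> ->].
  { split; apply Rsqr_0_uniq; unfold Rsqr; pose proof (Rle_0_sqr a1); pose proof (Rle_0_sqr a2); unfold Rsqr in *; lra. }
  destruct HI; lra.
Qed.

Lemma pick2 (ut cz q k : R) : 0 < q -> 0 < k -> (ut = k * q \/ ut = - (k * q)) -> (cz = q \/ cz = - q) ->
  (0 < ut * cz -> ut = k * cz) /\ (ut * cz <= 0 -> ut = - (k * cz)).
Proof.
  intros Hq Hk Hu Hc. assert (Hqq : 0 < k * q * q) by (apply Rmult_lt_0_compat; [apply Rmult_lt_0_compat|]; auto).
  destruct Hu as [-> | ->], Hc as [-> | ->]; split; intro H; try lra;
  exfalso; match type of H with context [?x * ?y] => assert (x * y = k*q*q \/ x * y = - (k*q*q)) by (first [left; ring | right; ring]) end; lra.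
Qed.

Lemma case_T2p L r lam :
  is_lattice L -> normalised L -> 0 < lam -> lam_hyp L lam -> has_type L T2p r ->
  exists g : osc, forall y,
    (exists x, L x /\ y = Fu (1 / (s0 T2p r * INR r * lam)) x) <->
    (exists x, L x /\ y = conjg g x).
Proof.
  intros Hlat Hn Hlam Hl Ht.
  destruct (nonT1_setup L r lam T2p Hlat Hn Hlam Hl Ht ltac:(discriminate))
    as [a [b [c [d [La [Lb [Lc [Ld [Hnf [Ta [Tb [Ec [HI [Td [Ea [Eb [Hpos Hcond]]]]]]]]]]]]]]]]].
  simpl in Hcond. destruct (proj1 (Nat.even_spec r) Hcond) as [m Hm].
  assert (Hr : INR r = 2 * INR m) by (rewrite Hm, mult_INR; simpl; ring).
  pose proof Hlat as [HL _].
  destruct a as [a1 a2 az at0], b as [b1 b2 bz bt0], d as [d1 d2 dz t]; simpl in Ta, Tb, Ec, HI, Td; subst at0 bt0.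
  set (I := a1 * b2 - a2 * b1) in *.
  set (cz := I / INR r) in *.
  cbn [S_images fst snd] in Ea, Eb.
  rewrite conjg_d_H, Ec, oinv_H, omul_H in Ea by reflexivity.
  rewrite conjg_d_H, Ec, !oinv_H, omul_H in Eb by reflexivity.
  unfold Zc in Ea, Eb; simpl in Ea, Eb.
  injection Ea as A1 A2 A3. injection Eb as B1 B2 B3.
  assert (Hnz := nz_of_I a1 a2 b1 b2 HI).
  destruct (rot_zero (cos t + 1) (sin t) a1 a2 ltac:(lra) ltac:(lra) Hnz) as [HC HS].
  assert (HC' : cos t = -1) by lra. rewrite HC', HS in A3, B3.
  simpl. set (u := 1 / (2 * INR r * lam)).
  assert (Hm0 : INR m <> 0) by (apply not_0_INR; lia).
  assert (Hkb : a1 / 2 * b2 - a2 / 2 * b1 = IZR (Z.of_nat m) * cz).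
  { unfold cz, I. rewrite <- INR_IZR_INZ, Hr. field. auto. }
  assert (Hka : a1 / 2 * a2 - a2 / 2 * a1 = IZR 0 * cz) by (simpl; field).
  assert (Hr0 : 0 < / INR r) by (apply Rinv_0_lt_compat, lt_0_INR; lia).
  assert (Hu : u * t = /2 * / INR r \/ u * t = - (/2 * / INR r)).
  { unfold u. destruct Td as [-> | ->]; [left|right]; field; split; lra. }
  assert (Hcz : cz = / INR r \/ cz = - / INR r).
  { unfold cz. destruct HI as [-> | ->]; [left|right]; field; lra. }
  exists (mkOsc (a1 / 2) (a2 / 2) 0 0).
  destruct (pick2 (u*t) cz (/ INR r) (/2) Hr0 ltac:(lra) Hu Hcz) as [P1 P2].
  destruct (Rlt_or_le 0 (u * t * cz)) as [Hp | Hp]; [apply P1 in Hp | apply P2 in Hp].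
  - apply (hard_finish L (mkOsc a1 a2 az 0) (mkOsc b1 b2 bz 0) c (mkOsc d1 d2 dz t) u (a1/2) (a2/2) cz 0 (Z.of_nat m) 1 (-1)); auto.
    apply (conj_d_goal _ _ _ _ _ _ cz); simpl; auto; rewrite ?HC', ?HS; [lra|lra|]. lra.
  - apply (hard_finish L (mkOsc a1 a2 az 0) (mkOsc b1 b2 bz 0) c (mkOsc d1 d2 dz t) u (a1/2) (a2/2) cz 0 (Z.of_nat m) 1 0); auto.
    apply (conj_d_goal _ _ _ _ _ _ cz); simpl; auto; rewrite ?HC', ?HS; [lra|lra|]. lra.
Qed.

Ltac repl_rot :=
  repeat match goal with
  | |- context [ - sin ?t * ?x - cos ?t * ?y ] =>
      let v := fresh "v" in
      assert (v : - sin t * x - cos t * y = - (sin t * x + cos t * y)) by ring; rewrite v; clear v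
  | |- context [ - cos ?t * ?x + sin ?t * ?y ] =>
      let v := fresh "v" in
      assert (v : - cos t * x + sin t * y = - (cos t * x - sin t * y)) by ring; rewrite v; clear v
  end.

Lemma case_T4 L r lam :
  is_lattice L -> normalised L -> 0 < lam -> lam_hyp L lam -> has_type L T4 r ->
  Nat.eqb (Nat.modulo r 4) 2 = true ->
  exists g : osc, forall y,
    (exists x, L x /\ y = Fu (1 / (s0 T4 r * INR r * lam)) x) <->
    (exists x, L x /\ y = conjg g x).
Proof.
  intros Hlat Hn Hlam Hl Ht Hmod.
  destruct (nonT1_setup L r lam T4 Hlat Hn Hlam Hl Ht ltac:(discriminate))
    as [a [b [c [d [La [Lb [Lc [Ld [Hnf [Ta [Tb [Ec [HI [Td [Ea [Eb [Hpos Hcond]]]]]]]]]]]]]]]]].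
  assert (Hs0 : s0 T4 r = 2) by (unfold s0; rewrite Hmod; reflexivity).
  apply Nat.eqb_eq in Hmod.
  assert (Hm : exists m, r = (4 * m + 2)%nat).
  { exists (r/4)%nat. pose proof (Nat.div_mod_eq r 4). lia. }
  destruct Hm as [m Hm].
  assert (Hr : INR r = 4 * INR m + 2) by (rewrite Hm, plus_INR, mult_INR; simpl; ring).
  pose proof Hlat as [HL _].
  destruct a as [a1 a2 az at0], b as [b1 b2 bz bt0], d as [d1 d2 dz t];
    simpl in Ta, Tb, Ec, HI, Td; subst at0 bt0.
  set (I := a1 * b2 - a2 * b1) in *.
  assert (HIdef : I = a1 * b2 - a2 * b1) by reflexivity.
  set (cz := I / INR r) in *.
  assert (Hr0 : 0 < / INR r) by (apply Rinv_0_lt_compat, lt_0_INR; lia).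
  assert (Hrp : 0 < INR r) by (apply lt_0_INR; lia).
  assert (HIc : I = INR r * cz) by (unfold cz; field; lra).
  cbn [S_images fst snd] in Ea, Eb.
  rewrite conjg_d_H in Ea. rewrite conjg_d_H, oinv_H in Eb by reflexivity.
  unfold Zc in Ea, Eb; simpl in Ea, Eb.
  injection Ea as A1 A2 A3. injection Eb as B1 B2 B3.
  rewrite A1, A2 in A3. rewrite B1, B2 in B3.
  rewrite Hs0. set (u := 1 / (2 * INR r * lam)).
  assert (Hu : u * t = /2 * / INR r \/ u * t = - (/2 * / INR r)).
  { unfold u. destruct Td as [-> | ->]; [left|right]; field; split; lra. }
  assert (Hcz : cz = / INR r \/ cz = - / INR r).
  { unfold cz. destruct HI as [-> | ->]; [left|right]; field; lra. }
  clearbody cz I.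
  exists (mkOsc ((a1 + b1) / 2) ((a2 + b2) / 2) 0 0).
  assert (Hka : (a1 + b1) / 2 * a2 - (a2 + b2) / 2 * a1 = IZR (- (2 * Z.of_nat m + 1)) * cz).
  { rewrite opp_IZR, plus_IZR, mult_IZR, <- INR_IZR_INZ. rewrite Hr in HIc. simpl. lra. }
  assert (Hkb : (a1 + b1) / 2 * b2 - (a2 + b2) / 2 * b1 = IZR (2 * Z.of_nat m + 1) * cz).
  { rewrite plus_IZR, mult_IZR, <- INR_IZR_INZ. rewrite Hr in HIc. simpl. lra. }
  destruct (pick2 (u*t) cz (/ INR r) (/2) Hr0 ltac:(lra) Hu Hcz) as [P1 P2].
  destruct (Rlt_or_le 0 (u * t * cz)) as [Hp | Hp]; [apply P1 in Hp | apply P2 in Hp].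
  - apply (hard_finish L (mkOsc a1 a2 az 0) (mkOsc b1 b2 bz 0) c (mkOsc d1 d2 dz t) u
       ((a1+b1)/2) ((a2+b2)/2) cz _ _ 1 (- Z.of_nat m - 1) HL La Lb Lc Ld Hnf eq_refl eq_refl Ec Hka Hkb).
    apply (conj_d_goal _ _ _ _ _ _ cz); simpl; auto; [lra|lra|].
    repl_rot.
    replace (sin t * ((a1 + b1) / 2) + cos t * ((a2 + b2) / 2)) with ((b2 - a2)/2) by lra.
    replace (cos t * ((a1 + b1) / 2) - sin t * ((a2 + b2) / 2)) with ((b1 - a1)/2) by lra.
    rewrite minus_IZR, opp_IZR, <- INR_IZR_INZ. rewrite Hr in HIc. lra.
  - apply (hard_finish L (mkOsc a1 a2 az 0) (mkOsc b1 b2 bz 0) c (mkOsc d1 d2 dz t) u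
       ((a1+b1)/2) ((a2+b2)/2) cz _ _ 1 (- Z.of_nat m) HL La Lb Lc Ld Hnf eq_refl eq_refl Ec Hka Hkb).
    apply (conj_d_goal _ _ _ _ _ _ cz); simpl; auto; [lra|lra|].
    repl_rot.
    replace (sin t * ((a1 + b1) / 2) + cos t * ((a2 + b2) / 2)) with ((b2 - a2)/2) by lra.
    replace (cos t * ((a1 + b1) / 2) - sin t * ((a2 + b2) / 2)) with ((b1 - a1)/2) by lra.
    rewrite opp_IZR, <- INR_IZR_INZ. rewrite Hr in HIc. lra.
Qed.

Lemma case_T4p L r lam :
  is_lattice L -> normalised L -> 0 < lam -> lam_hyp L lam -> has_type L T4p r ->
  Nat.eqb (Nat.modulo r 4) 2 = false ->
  exists g : osc, forall y,
    (exists x, L x /\ y = Fu (1 / (s0 T4p r * INR r * lam)) x) <->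
    (exists x, L x /\ y = conjg g x).
Proof.
  intros Hlat Hn Hlam Hl Ht Hmod.
  destruct (nonT1_setup L r lam T4p Hlat Hn Hlam Hl Ht ltac:(discriminate))
    as [a [b [c [d [La [Lb [Lc [Ld [Hnf [Ta [Tb [Ec [HI [Td [Ea [Eb [Hpos Hcond]]]]]]]]]]]]]]]]].
  assert (Hs0 : s0 T4p r = 2) by (unfold s0; rewrite Hmod; reflexivity).
  apply Nat.eqb_neq in Hmod.
  assert (Hm : exists m, r = (4 * m)%nat).
  { simpl in Hcond. destruct (proj1 (Nat.even_spec r) Hcond) as [m' Hm'].
    exists (r/4)%nat. pose proof (Nat.div_mod_eq r 4). pose proof (Nat.mod_upper_bound r 4). lia. }
  destruct Hm as [m Hm].
  assert (Hr : INR r = 4 * INR m) by (rewrite Hm, mult_INR; simpl; ring).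
  pose proof Hlat as [HL _].
  destruct a as [a1 a2 az at0], b as [b1 b2 bz bt0], d as [d1 d2 dz t];
    simpl in Ta, Tb, Ec, HI, Td; subst at0 bt0.
  set (I := a1 * b2 - a2 * b1) in *.
  assert (HIdef : I = a1 * b2 - a2 * b1) by reflexivity.
  set (cz := I / INR r) in *.
  assert (Hr0 : 0 < / INR r) by (apply Rinv_0_lt_compat, lt_0_INR; lia).
  assert (Hrp : 0 < INR r) by (apply lt_0_INR; lia).
  assert (HIc : I = INR r * cz) by (unfold cz; field; lra).
  cbn [S_images fst snd] in Ea, Eb.
  rewrite conjg_d_H, Ec, omul_Zc_r in Ea. unfold shiftz in Ea. rewrite conjg_d_H, oinv_H in Eb by reflexivity.
  unfold Zc in Ea, Eb; simpl in Ea, Eb.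
  injection Ea as A1 A2 A3. injection Eb as B1 B2 B3.
  rewrite A1, A2 in A3. rewrite B1, B2 in B3.
  rewrite Hs0. set (u := 1 / (2 * INR r * lam)).
  assert (Hu : u * t = /2 * / INR r \/ u * t = - (/2 * / INR r)).
  { unfold u. destruct Td as [-> | ->]; [left|right]; field; split; lra. }
  assert (Hcz : cz = / INR r \/ cz = - / INR r).
  { unfold cz. destruct HI as [-> | ->]; [left|right]; field; lra. }
  clearbody cz I.
  exists (mkOsc ((a1 + b1) / 2) ((a2 + b2) / 2) 0 0).
  assert (Hka : (a1 + b1) / 2 * a2 - (a2 + b2) / 2 * a1 = IZR (- (2 * Z.of_nat m)) * cz).
  { rewrite opp_IZR, mult_IZR, <- INR_IZR_INZ. rewrite Hr in HIc. simpl. lra. }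
  assert (Hkb : (a1 + b1) / 2 * b2 - (a2 + b2) / 2 * b1 = IZR (2 * Z.of_nat m) * cz).
  { rewrite mult_IZR, <- INR_IZR_INZ. rewrite Hr in HIc. simpl. lra. }
  destruct (pick2 (u*t) cz (/ INR r) (/2) Hr0 ltac:(lra) Hu Hcz) as [P1 P2].
  destruct (Rlt_or_le 0 (u * t * cz)) as [Hp | Hp]; [apply P1 in Hp | apply P2 in Hp].
  - apply (hard_finish L (mkOsc a1 a2 az 0) (mkOsc b1 b2 bz 0) c (mkOsc d1 d2 dz t) u
       ((a1+b1)/2) ((a2+b2)/2) cz _ _ 1 (- Z.of_nat m - 1) HL La Lb Lc Ld Hnf eq_refl eq_refl Ec Hka Hkb).
    apply (conj_d_goal _ _ _ _ _ _ cz); simpl; auto; [lra|lra|].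
    repl_rot.
    replace (sin t * ((a1 + b1) / 2) + cos t * ((a2 + b2) / 2)) with ((b2 - a2)/2) by lra.
    replace (cos t * ((a1 + b1) / 2) - sin t * ((a2 + b2) / 2)) with ((b1 - a1)/2) by lra.
    rewrite minus_IZR, opp_IZR, <- INR_IZR_INZ. rewrite Hr in HIc. lra.
  - apply (hard_finish L (mkOsc a1 a2 az 0) (mkOsc b1 b2 bz 0) c (mkOsc d1 d2 dz t) u
       ((a1+b1)/2) ((a2+b2)/2) cz _ _ 1 (- Z.of_nat m) HL La Lb Lc Ld Hnf eq_refl eq_refl Ec Hka Hkb).
    apply (conj_d_goal _ _ _ _ _ _ cz); simpl; auto; [lra|lra|].
    repl_rot.
    replace (sin t * ((a1 + b1) / 2) + cos t * ((a2 + b2) / 2)) with ((b2 - a2)/2) by lra.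
    replace (cos t * ((a1 + b1) / 2) - sin t * ((a2 + b2) / 2)) with ((b1 - a1)/2) by lra.
    rewrite opp_IZR, <- INR_IZR_INZ. rewrite Hr in HIc. lra.
Qed.

Lemma case_T3p L r lam :
  is_lattice L -> normalised L -> 0 < lam -> lam_hyp L lam -> has_type L T3p r ->
  exists g : osc, forall y,
    (exists x, L x /\ y = Fu (1 / (s0 T3p r * INR r * lam)) x) <->
    (exists x, L x /\ y = conjg g x).
Proof.
  intros Hlat Hn Hlam Hl Ht.
  destruct (nonT1_setup L r lam T3p Hlat Hn Hlam Hl Ht ltac:(discriminate))
    as [a [b [c [d [La [Lb [Lc [Ld [Hnf [Ta [Tb [Ec [HI [Td [Ea [Eb [Hpos Hcond]]]]]]]]]]]]]]]]].
  assert (Hs0 : s0 T3p r = 3) by reflexivity.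
  assert (Hm : exists m, r = (3 * m)%nat).
  { unfold type_cond in Hcond. exists (r/3)%nat. pose proof (Nat.div_mod_eq r 3). lia. }
  destruct Hm as [m Hm].
  assert (Hr : INR r = 3 * INR m) by (rewrite Hm, mult_INR; simpl; ring).
  pose proof Hlat as [HL _].
  destruct a as [a1 a2 az at0], b as [b1 b2 bz bt0], d as [d1 d2 dz t];
    simpl in Ta, Tb, Ec, HI, Td; subst at0 bt0.
  set (I := a1 * b2 - a2 * b1) in *.
  assert (HIdef : I = a1 * b2 - a2 * b1) by reflexivity.
  set (cz := I / INR r) in *.
  assert (Hr0 : 0 < / INR r) by (apply Rinv_0_lt_compat, lt_0_INR; lia).
  assert (Hrp : 0 < INR r) by (apply lt_0_INR; lia).
  assert (HIc : I = INR r * cz) by (unfold cz; field; lra).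
  cbn [S_images fst snd] in Ea, Eb.
  rewrite conjg_d_H, Ec, ozpow_Zc, omul_Zc_r in Ea. unfold shiftz in Ea.
  rewrite conjg_d_H, Ec, omul_Zc_r, !oinv_H in Eb by reflexivity. unfold shiftz in Eb.
  rewrite omul_H in Eb by reflexivity.
  simpl in Ea, Eb.
  injection Ea as A1 A2 A3. injection Eb as B1 B2 B3.
  rewrite A1, A2 in A3. rewrite B1, B2 in B3.
  rewrite minus_IZR, <- INR_IZR_INZ in A3.
  rewrite Hs0. set (u := 1 / (3 * INR r * lam)).
  assert (Hu : u * t = /3 * / INR r \/ u * t = - (/3 * / INR r)).
  { unfold u. destruct Td as [-> | ->]; [left|right]; field; split; lra. }
  assert (Hcz : cz = / INR r \/ cz = - / INR r).
  { unfold cz. destruct HI as [-> | ->]; [left|right]; field; lra. }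
  clearbody cz I. rewrite Hr in HIc.
  destruct (pick2 (u*t) cz (/ INR r) (/3) Hr0 ltac:(lra) Hu Hcz) as [P1 P2].
  destruct (Rlt_or_le 0 (u * t * cz)) as [Hp | Hp]; [apply P1 in Hp | apply P2 in Hp].
  - exists (mkOsc ((2*a1 + b1) / 3) ((2*a2 + b2) / 3) 0 0).
    assert (Hka : (2*a1 + b1) / 3 * a2 - (2*a2 + b2) / 3 * a1 = IZR (- Z.of_nat m) * cz).
    { rewrite opp_IZR, <- INR_IZR_INZ. lra. }
    assert (Hkb : (2*a1 + b1) / 3 * b2 - (2*a2 + b2) / 3 * b1 = IZR (2 * Z.of_nat m) * cz).
    { rewrite mult_IZR, <- INR_IZR_INZ. simpl. lra. }
    apply (hard_finish L (mkOsc a1 a2 az 0) (mkOsc b1 b2 bz 0) c (mkOsc d1 d2 dz t) u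
       _ _ cz _ _ 1 (- (2 * Z.of_nat m)) HL La Lb Lc Ld Hnf eq_refl eq_refl Ec Hka Hkb).
    apply (conj_d_goal _ _ _ _ _ _ cz); cbn [ox oy oz ot]; auto; [lra|lra|].
    repl_rot.
    replace (sin t * ((2*a1 + b1) / 3) + cos t * ((2*a2 + b2) / 3)) with ((b2 - a2)/3) by lra.
    replace (cos t * ((2*a1 + b1) / 3) - sin t * ((2*a2 + b2) / 3)) with ((b1 - a1)/3) by lra.
    rewrite opp_IZR, mult_IZR, <- INR_IZR_INZ. rewrite Hr in A3. simpl. lra.
  - exists (mkOsc (- (2*a1 + b1) / 3) (- (2*a2 + b2) / 3) 0 0).
    assert (Hka : - (2*a1 + b1) / 3 * a2 - - (2*a2 + b2) / 3 * a1 = IZR (Z.of_nat m) * cz).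
    { rewrite <- INR_IZR_INZ. lra. }
    assert (Hkb : - (2*a1 + b1) / 3 * b2 - - (2*a2 + b2) / 3 * b1 = IZR (- (2 * Z.of_nat m)) * cz).
    { rewrite opp_IZR, mult_IZR, <- INR_IZR_INZ. simpl. lra. }
    apply (hard_finish L (mkOsc a1 a2 az 0) (mkOsc b1 b2 bz 0) c (mkOsc d1 d2 dz t) u
       _ _ cz _ _ (-1) (Z.of_nat m) HL La Lb Lc Ld Hnf eq_refl eq_refl Ec Hka Hkb).
    apply (conj_d_goal _ _ _ _ _ _ cz); cbn [ox oy oz ot]; auto; [lra|lra|].
    repl_rot.
    replace (sin t * (- (2*a1 + b1) / 3) + cos t * (- (2*a2 + b2) / 3)) with (- (b2 - a2)/3) by lra.
    replace (cos t * (- (2*a1 + b1) / 3) - sin t * (- (2*a2 + b2) / 3)) with (- (b1 - a1)/3) by lra.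
    rewrite <- INR_IZR_INZ. rewrite Hr in A3. lra.
Qed.

Lemma gcd_split p q : ~ (p = 0%Z /\ q = 0%Z) ->
  exists g p' q' u v, g <> 0%Z /\ p = (g * p')%Z /\ q = (g * q')%Z /\ (u * p' + v * q' = 1)%Z.
Proof.
  intros Hpq. set (g := Z.gcd p q).
  assert (Hg : g <> 0%Z) by (intro E; apply Hpq; apply Z.gcd_eq_0; exact E).
  destruct (Z.gcd_divide_l p q) as [p' Hp']. destruct (Z.gcd_divide_r p q) as [q' Hq'].
  destruct (Z.gcd_bezout p q g eq_refl) as [u [v Huv]].
  fold g in Hp', Hq'.
  exists g, p', q', u, v. repeat split; try lia.
  rewrite Hp', Hq' in Huv.
  apply (Z.mul_reg_l _ _ g Hg). lia.
Qed.

Lemma comm_closed y : closed (fun x => omul y x = omul x y).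
Proof.
  split; [|split].
  - rewrite omul_oone_l, omul_oone_r; reflexivity.
  - intros x z Hx Hz. rewrite <- omul_assoc, Hx, omul_assoc, Hz, omul_assoc. reflexivity.
  - intros x Hx.
    transitivity (omul (omul (oinv x) (omul x y)) (oinv x)).
    + rewrite <- (omul_assoc (oinv x) x y), omul_oinv_l, omul_oone_l. reflexivity.
    + rewrite <- Hx. rewrite !omul_assoc, omul_oinv_r, omul_oone_r. reflexivity.
Qed.

Lemma nz_of_I' a1 a2 b1 b2 : a1 * b2 - a2 * b1 <> 0 -> a1 * a1 + a2 * a2 <> 0.
Proof.
  intros HI E. apply HI. assert (a1 = 0 /\ a2 = 0) as [-> ->].
  { split; apply Rsqr_0_uniq; unfold Rsqr; pose proof (Rle_0_sqr a1); pose proof (Rle_0_sqr a2); unfold Rsqr in *; lra. }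
  ring.
Qed.

Lemma central_geom y a0 b0 : ot a0 = 0 -> ot b0 = 0 ->
  ox a0 * oy b0 - oy a0 * ox b0 <> 0 ->
  omul y a0 = omul a0 y -> omul y b0 = omul b0 y -> rt y /\ ox y = 0 /\ oy y = 0.
Proof.
  destruct y as [y1 y2 yz t], a0 as [p1 p2 pz pt], b0 as [q1 q2 qz qt]; simpl.
  intros -> -> HI Ea Eb.
  unfold omul in Ea, Eb; simpl in Ea, Eb. rewrite cos_0, sin_0 in Ea, Eb.
  injection Ea as A1 A2 A3. injection Eb as B1 B2 B3.
  destruct (rot_zero (cos t - 1) (sin t) p1 p2 ltac:(lra) ltac:(lra) (nz_of_I' _ _ _ _ HI)) as [HC HS].
  assert (HC' : cos t = 1) by lra. rewrite HC', HS in A3, B3.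
  assert (E1 : y1 * p2 - y2 * p1 = 0) by lra.
  assert (E2 : y1 * q2 - y2 * q1 = 0) by lra.
  assert (F1 : y1 * (p1 * q2 - p2 * q1) = p1 * (y1 * q2 - y2 * q1) - q1 * (y1 * p2 - y2 * p1)) by ring.
  assert (F2 : y2 * (p1 * q2 - p2 * q1) = p2 * (y1 * q2 - y2 * q1) - q2 * (y1 * p2 - y2 * p1)) by ring.
  rewrite E1, E2 in F1, F2.
  split; [split; auto|]. split.
  - apply (Rmult_eq_reg_r (p1 * q2 - p2 * q1)); auto. lra.
  - apply (Rmult_eq_reg_r (p1 * q2 - p2 * q1)); auto. lra.
Qed.

Lemma omul_shiftz_l x y w : omul (shiftz x w) y = shiftz (omul x y) w.
Proof. destruct x, y; unfold omul, shiftz; simpl. apply osc_eq; ring. Qed.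
Lemma omul_shiftz_r x y w : omul x (shiftz y w) = shiftz (omul x y) w.
Proof. destruct x, y; unfold omul, shiftz; simpl. apply osc_eq; ring. Qed.
Lemma oinv_shiftz x w : oinv (shiftz x w) = shiftz (oinv x) (- w).
Proof. destruct x; unfold oinv, shiftz; simpl. apply osc_eq; ring. Qed.
Lemma onpow_shiftz x w n : onpow (shiftz x w) n = shiftz (onpow x n) (INR n * w).
Proof.
  induction n.
  - simpl. unfold oone, shiftz; simpl. apply osc_eq; ring.
  - rewrite S_INR. cbn [onpow]. rewrite IHn, omul_shiftz_l, omul_shiftz_r, shiftz_shiftz.
    f_equal; ring.
Qed.
Lemma ozpow_shiftz x w k : ozpow (shiftz x w) k = shiftz (ozpow x k) (IZR k * w).
Proof.
  destruct k; simpl.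
  - unfold oone, shiftz; simpl. apply osc_eq; ring.
  - rewrite onpow_shiftz, INR_IPR. reflexivity.
  - rewrite oinv_shiftz, onpow_shiftz, INR_IPR. change (IZR (Z.neg p)) with (- IPR p). f_equal; ring.
Qed.

Lemma closed_rt : closed rt.
Proof.
  split; [|split].
  - apply rt_H; reflexivity.
  - apply rt_mul.
  - apply rt_inv.
Qed.

Lemma conjg_eta_rt e1 e2 x : rt x -> conjg (mkOsc e1 e2 0 0) x = shiftz x (e1 * oy x - e2 * ox x).
Proof.
  destruct x as [x1 x2 xz t]; intros [Hc Hs]; simpl in Hc, Hs.
  rewrite conjg_eta_d, Hc, Hs. unfold shiftz; simpl. apply osc_eq; field.
Qed.

Lemma commg_rt x y : rt x -> rt y -> commg x y = Zc (ox x * oy y - oy x * ox y).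
Proof.
  intros Hx Hy. unfold commg.
  rewrite (omul_rt (omul x y)) by (apply rt_mul; auto).
  rewrite (omul_rt x) by auto. rewrite (omul_rt (oinv x)) by (apply rt_inv; auto).
  rewrite !oinv_rt by auto. unfold Zc; simpl. apply osc_eq; field.
Qed.

Lemma nf_coords a b c d i j k m : rt a -> rt b -> rt c -> rt d ->
  let x := omul (hword a b c (i,j,k)) (ozpow d m) in
  ox x = IZR i * ox a + IZR j * ox b + IZR k * ox c + IZR m * ox d /\
  oy x = IZR i * oy a + IZR j * oy b + IZR k * oy c + IZR m * oy d /\
  ot x = IZR i * ot a + IZR j * ot b + IZR k * ot c + IZR m * ot d /\ rt x.
Proof.
  intros Ha Hb Hc Hd x. unfold x, hword.
  assert (R : forall y (n : Z), rt y -> rt (ozpow y n)) by (intros; apply closed_ozpow; auto; apply closed_rt).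
  pose proof (R a i Ha). pose proof (R b j Hb). pose proof (R c k Hc). pose proof (R d m Hd).
  assert (Hx : rt (omul (omul (ozpow a i) (omul (ozpow b j) (ozpow c k))) (ozpow d m))).
  { apply rt_mul; auto. apply rt_mul; auto. apply rt_mul; auto. }
  split; [|split; [|split]]; auto.
  all: rewrite (omul_rt (omul _ _)) by (apply rt_mul; auto; apply rt_mul; auto).
  all: rewrite (omul_rt (ozpow a i)) by auto; rewrite (omul_rt (ozpow b j)) by auto.
  all: rewrite !ozpow_rt by auto; simpl; ring.
Qed.

Lemma conj_fix_comm y x : conjg y x = x -> omul y x = omul x y.
Proof.
  unfold conjg. intro H. rewrite <- H at 2. rewrite omul_assoc, omul_oinv_l, omul_oone_r. reflexivity.
Qed.

Lemma comm_conj y x : omul y x = omul x y -> conjg y x = x.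
Proof.
  unfold conjg. intro H. rewrite H, omul_assoc, omul_oinv_r, omul_oone_r. reflexivity.
Qed.

Lemma conjg_self x : conjg x x = x.
Proof. apply comm_conj. reflexivity. Qed.

Lemma oinv_commg x y : oinv (commg x y) = commg y x.
Proof. unfold commg. rewrite !oinv_omul, !oinv_oinv. reflexivity. Qed.

Lemma conj_from_comm x y w : commg x y = Zc w -> conjg x y = shiftz y w.
Proof.
  intro H. rewrite <- omul_Zc_l, <- H. unfold commg, conjg.
  rewrite !omul_assoc, omul_oinv_l, omul_oone_r. reflexivity.
Qed.

Lemma oinv_Zc w : oinv (Zc w) = Zc (- w).
Proof. unfold oinv, Zc; simpl. rewrite cos_0, sin_0. apply osc_eq; ring. Qed.

Lemma conj_from_comm' x y w : commg x y = Zc w -> conjg y x = shiftz x (- w).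
Proof.
  intro H. apply conj_from_comm. rewrite <- oinv_commg, H. apply oinv_Zc.
Qed.

Lemma conj_nf y a b c d wa wb i j k m :
  conjg y a = shiftz a wa -> conjg y b = shiftz b wb -> conjg y c = c -> conjg y d = d ->
  conjg y (omul (hword a b c (i,j,k)) (ozpow d m)) =
  shiftz (omul (hword a b c (i,j,k)) (ozpow d m)) (IZR i * wa + IZR j * wb).
Proof.
  intros Ha Hb Hc Hd.
  rewrite (hom_hword (conjg y)) by (apply conjg_mul || apply conjg_ozpow).
  rewrite Ha, Hb, Hc, Hd, !ozpow_shiftz. unfold hword.
  repeat rewrite ?omul_shiftz_l, ?omul_shiftz_r, ?shiftz_shiftz. f_equal; ring.
Qed.

Lemma T1_geom L r0 a b c d a0 b0 :
  is_subgroup L -> L a -> L b -> L c -> L d -> L a0 -> L b0 ->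
  ot a0 = 0 -> ot b0 = 0 -> ox a0 * oy b0 - oy a0 * ox b0 <> 0 -> (0 < r0)%nat ->
  omul c a = omul a c -> omul c b = omul b c -> omul c d = omul d c ->
  commg a b = ozpow c (Z.of_nat r0) -> conjg d a = a -> conjg d b = b ->
  (forall x, L x -> exists i j k m, x = omul (hword a b c (i,j,k)) (ozpow d m)) ->
  rt a /\ rt b /\ rt d /\ ox d = 0 /\ oy d = 0 /\ c = Zc (oz c) /\
  ox a * oy b - oy a * ox b = INR r0 * oz c.
Proof.
  intros HL La Lb Lc Ld La0 Lb0 Ta0 Tb0 HI0 Hr0 E1 E2 E3 E4 E5 E6 Hnf.
  assert (Tc : ot c = 0).
  { pose proof (f_equal ot E4) as E. rewrite ot_commg, ot_ozpow, <- INR_IZR_INZ in E.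
    assert (INR r0 <> 0) by (apply not_0_INR; lia).
    apply (Rmult_eq_reg_l (INR r0)); auto. lra. }
  assert (Da : omul d a = omul a d) by (apply conj_fix_comm; auto).
  assert (Db : omul d b = omul b d) by (apply conj_fix_comm; auto).
  assert (Cc : forall x, L x -> omul c x = omul x c).
  { intros x Hx. destruct (Hnf x Hx) as [i [j [k [m ->]]]]. unfold hword.
    apply (closed_hword (fun x => omul c x = omul x c)); auto. apply comm_closed. }
  assert (Cd : forall x, L x -> omul d x = omul x d).
  { intros x Hx. destruct (Hnf x Hx) as [i [j [k [m ->]]]]. unfold hword.
    apply (closed_hword (fun x => omul d x = omul x d)); auto. all: try apply comm_closed; try (symmetry; auto). }
  destruct (central_geom c a0 b0 Ta0 Tb0 HI0 (Cc a0 La0) (Cc b0 Lb0)) as [_ [c1 c2]].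
  destruct (central_geom d a0 b0 Ta0 Tb0 HI0 (Cd a0 La0) (Cd b0 Lb0)) as [Rd [d1 d2]].
  assert (Ec : c = Zc (oz c)) by (destruct c; simpl in *; subst; reflexivity).
  set (w := INR r0 * oz c).
  assert (Hcomm : commg a b = Zc w).
  { rewrite E4, Ec, ozpow_Zc, <- INR_IZR_INZ. reflexivity. }
  assert (Cab : conjg a b = shiftz b w) by (apply conj_from_comm; auto).
  assert (Cba : conjg b a = shiftz a (- w)) by (apply conj_from_comm'; auto).
  assert (Cac : conjg a c = c) by (apply comm_conj; symmetry; auto).
  assert (Cbc : conjg b c = c) by (apply comm_conj; symmetry; auto).
  assert (Cad : conjg a d = d) by (apply comm_conj; symmetry; auto).
  assert (Cbd : conjg b d = d) by (apply comm_conj; symmetry; auto).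
  assert (Rot : forall y wa wb, conjg y a = shiftz a wa -> conjg y b = shiftz b wb -> conjg y c = c -> conjg y d = d -> rt y).
  { intros y wa wb Ha Hb Hc Hd.
    destruct (Hnf a0 La0) as [i [j [k [m Ha0]]]].
    pose proof (conj_nf y a b c d wa wb i j k m Ha Hb Hc Hd) as Hy. rewrite <- Ha0 in Hy.
    destruct y as [y1 y2 yz t], a0 as [p1 p2 pz pt]; simpl in Ta0; subst pt.
    rewrite conjg_d_H in Hy. unfold shiftz in Hy; simpl in Hy. injection Hy as Y1 Y2 _.
    assert (Hnz : p1 * p1 + p2 * p2 <> 0) by (apply (nz_of_I' _ _ (ox b0) (oy b0)); simpl in HI0; lra).
    destruct (rot_zero (cos t - 1) (sin t) p1 p2 ltac:(lra) ltac:(lra) Hnz) as [HC HS].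
    split; simpl; lra. }
  assert (Ra : rt a).
  { apply (Rot a 0 w); auto. rewrite conjg_self, shiftz_0; reflexivity. }
  assert (Rb : rt b).
  { apply (Rot b (- w) 0); auto. rewrite conjg_self, shiftz_0; reflexivity. }
  split; [exact Ra|]. split; [exact Rb|]. split; [exact Rd|]. split; [exact d1|].
  split; [exact d2|]. split; [exact Ec|].
  rewrite commg_rt in Hcomm by auto. unfold Zc in Hcomm. injection Hcomm as H. exact H.
Qed.

Lemma solve2 x y p1 p2 q1 q2 : x * p1 + y * q1 = 0 -> x * p2 + y * q2 = 0 -> p1 * q2 - p2 * q1 <> 0 -> x = 0 /\ y = 0.
Proof.
  intros H1 H2 H.
  assert (F1 : x * (p1 * q2 - p2 * q1) = q2 * (x * p1 + y * q1) - q1 * (x * p2 + y * q2)) by ring.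
  assert (F2 : y * (p1 * q2 - p2 * q1) = p1 * (x * p2 + y * q2) - p2 * (x * p1 + y * q1)) by ring.
  rewrite H1, H2 in F1, F2. split.
  - apply (Rmult_eq_reg_r (p1 * q2 - p2 * q1)); auto. lra.
  - apply (Rmult_eq_reg_r (p1 * q2 - p2 * q1)); auto. lra.
Qed.

Lemma pm1 (e : R) : e = 1 \/ e = -1 -> exists z : Z, e = IZR z /\ (z * z = 1)%Z.
Proof. intros [-> | ->]; [exists 1%Z | exists (-1)%Z]; split; reflexivity. Qed.

Lemma LH_coords L a0 b0 c0 x :
  (forall x, LH L x -> exists p, x = hword a0 b0 c0 p) ->
  ot a0 = 0 -> ot b0 = 0 -> c0 = mkOsc 0 0 (oz c0) 0 -> LH L x ->
  exists i j k : Z, ox x = IZR i * ox a0 + IZR j * ox b0 /\ oy x = IZR i * oy a0 + IZR j * oy b0 /\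
     x = hword a0 b0 c0 (i,j,k).
Proof.
  intros Hnf Ta Tb Ec Hx. destruct (Hnf x Hx) as [[[i j] k] ->].
  assert (Tc : ot c0 = 0) by (rewrite Ec; reflexivity).
  destruct (hword_H a0 b0 c0 i j k Ta Tb Tc) as [X [Y _]].
  exists i, j, k. rewrite X, Y, Ec. simpl. repeat split; try ring.
Qed.

Lemma im_bilin x y z w a1 a2 b1 b2 :
  (x * a1 + y * b1) * (z * a2 + w * b2) - (x * a2 + y * b2) * (z * a1 + w * b1) = (x * w - y * z) * (a1 * b2 - a2 * b1).
Proof. ring. Qed.

Lemma T1_K L a b c d a0 b0 c0 r r0 lam p q s :
  is_subgroup L -> L a -> L b -> L c -> L d ->
  (forall x, L x -> exists i j k m, x = omul (hword a b c (i,j,k)) (ozpow d m)) ->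
  rt a -> rt b -> rt d -> ox d = 0 -> oy d = 0 -> c = Zc (oz c) ->
  ox a * oy b - oy a * ox b = INR r0 * oz c -> oz c <> 0 -> (0 < r0)%nat -> (0 < r)%nat ->
  (forall x, LH L x -> exists p, x = hword a0 b0 c0 p) -> LH L a0 -> LH L b0 -> LH L c0 ->
  (ox a0 * oy b0 - oy a0 * ox b0 = 1 \/ ox a0 * oy b0 - oy a0 * ox b0 = -1) ->
  c0 = mkOsc 0 0 ((ox a0 * oy b0 - oy a0 * ox b0) / INR r) 0 ->
  0 < lam -> ot a = IZR p * lam -> ot b = IZR q * lam -> ot d = IZR s * lam ->
  exists K : Z, 1 / (INR r / INR r0 * INR r * lam) * ot d = IZR K * oz c.
Proof.
  intros HL La Lb Lc Ld Hnf Ra Rb Rd d1 d2 Ec HIc Hcz Hr0 Hr Hnf0 [La0 Ta0] [Lb0 Tb0] [Lc0 Tc0] HI0 Ec0 Hlam Hp Hq Hs.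
  pose proof HL as [H1 [H2 H3]]. assert (CL : closed L) by (split; auto).
  set (cz := oz c) in *. set (I0 := ox a0 * oy b0 - oy a0 * ox b0) in *.
  assert (HI0nz : I0 <> 0) by (destruct HI0; lra).
  assert (Rc : rt c) by (rewrite Ec; apply rt_H; reflexivity).
  assert (HRr : 0 < INR r) by (apply lt_0_INR; lia).
  assert (HRr0 : 0 < INR r0) by (apply lt_0_INR; lia).
  assert (HInz : ox a * oy b - oy a * ox b <> 0).
  { rewrite HIc. apply Rmult_integral_contrapositive; split; lra. }
  destruct (Z.eq_dec s 0) as [Hs0 | Hs0].
  { exists 0%Z. rewrite Hs, Hs0. simpl. ring. }
  assert (Ec0' : c0 = mkOsc 0 0 (oz c0) 0) by (rewrite Ec0; reflexivity).
  assert (Tc : ot c = 0) by (rewrite Ec; reflexivity).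
  destruct (LH_coords L a0 b0 c0 c Hnf0 Ta0 Tb0 Ec0' (conj Lc Tc))
    as [i [j [k [Xc [Yc Hc]]]]].
  assert (Hij : IZR i = 0 /\ IZR j = 0).
  { apply (solve2 _ _ (ox a0) (oy a0) (ox b0) (oy b0)); auto; [rewrite <- Xc | rewrite <- Yc];
    rewrite Ec; reflexivity. }
  destruct Hij as [Hi Hj]. apply eq_IZR in Hi. apply eq_IZR in Hj. subst i j.
  assert (Eck : cz = IZR k * (I0 / INR r)).
  { unfold hword in Hc. change (ozpow a0 0) with oone in Hc. change (ozpow b0 0) with oone in Hc.
    rewrite !omul_oone_l in Hc. rewrite Ec0 in Hc. fold (Zc (I0 / INR r)) in Hc.
    rewrite ozpow_Zc in Hc. apply (f_equal oz) in Hc. exact Hc. }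
  destruct (Hnf c0 Lc0) as [i [j [k' [m Hc0]]]].
  destruct (nf_coords a b c d i j k' m Ra Rb Rc Rd) as [X0 [Y0 [T0 _]]]. rewrite <- Hc0 in X0, Y0, T0.
  assert (Hij : IZR i = 0 /\ IZR j = 0).
  { apply (solve2 _ _ (ox a) (oy a) (ox b) (oy b)); auto.
    - rewrite Ec0 in X0. rewrite Ec, d1 in X0. simpl in X0. lra.
    - rewrite Ec0 in Y0. rewrite Ec, d2 in Y0. simpl in Y0. lra. }
  destruct Hij as [Hi Hj]. apply eq_IZR in Hi. apply eq_IZR in Hj. subst i j.
  assert (Hm : m = 0%Z).
  { rewrite Tc0, Hs, Ec in T0. simpl in T0. apply eq_IZR.
    assert (IZR m * IZR s * lam = 0) by lra.
    apply Rmult_integral in H as [H | H]; [apply Rmult_integral in H as [H | H]|]; auto.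
    - exfalso. apply Hs0. apply eq_IZR. exact H.
    - lra. }
  subst m.
  assert (Ec0k : I0 / INR r = IZR k' * cz).
  { unfold hword in Hc0. change (ozpow a 0) with oone in Hc0. change (ozpow b 0) with oone in Hc0.
    change (ozpow d 0) with oone in Hc0. rewrite !omul_oone_l, omul_oone_r, Ec, ozpow_Zc in Hc0.
    rewrite Ec0 in Hc0. apply (f_equal oz) in Hc0. exact Hc0. }
  assert (Hkk : (k * k' = 1)%Z).
  { apply eq_IZR. rewrite mult_IZR. apply (Rmult_eq_reg_r cz); auto.
    rewrite Rmult_assoc, <- Ec0k, <- Eck. ring. }
  assert (HE : exists E, cz = E / INR r /\ (E = 1 \/ E = -1)).
  { exists (IZR k * I0). split. { rewrite Eck. field. lra. }
    destruct (Z.eq_mul_1 k k' Hkk) as [-> | ->]; destruct HI0 as [E0 | E0]; rewrite E0;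
      [left|right|right|left]; simpl; ring. }
  assert (Gen : ~ (p = 0%Z /\ q = 0%Z) -> exists N : Z, IZR s * (ox a * oy b - oy a * ox b) = IZR N * I0).
  { intro Hpq. destruct (gcd_split p q Hpq) as [g [p' [q' [u' [v' [Hg [Hp' [Hq' Huv]]]]]]]].
    assert (HuvR : IZR u' * IZR p' + IZR v' * IZR q' = 1).
    { rewrite <- !mult_IZR, <- plus_IZR, Huv. reflexivity. }
    set (X := omul (hword a b c ((s * u')%Z, (s * v')%Z, 0%Z)) (ozpow d (- g))).
    set (Y := omul (hword a b c ((- q')%Z, p', 0%Z)) (ozpow d 0)).
    assert (LX : L X) by (unfold X, hword; apply closed_hword; auto).
    assert (LY : L Y) by (unfold Y, hword; apply closed_hword; auto).
    destruct (nf_coords a b c d (s * u') (s * v') 0 (- g) Ra Rb Rc Rd) as [X1 [X2 [TX _]]].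
    destruct (nf_coords a b c d (- q') p' 0 0 Ra Rb Rc Rd) as [Y1 [Y2 [TY _]]].
    fold X in X1, X2, TX. fold Y in Y1, Y2, TY.
    assert (TX0 : ot X = 0).
    { rewrite TX, Hp, Hq, Hs, Tc, Hp', Hq', !mult_IZR, opp_IZR.
      transitivity (IZR s * IZR g * lam * (IZR u' * IZR p' + IZR v' * IZR q' - 1)); [ring|].
      rewrite HuvR. ring. }
    assert (TY0 : ot Y = 0).
    { rewrite TY, Hp, Hq, Hs, Tc, Hp', Hq', !mult_IZR, opp_IZR. ring. }
    destruct (LH_coords L a0 b0 c0 X Hnf0 Ta0 Tb0 Ec0' (conj LX TX0)) as [i1 [j1 [k1 [Xa [Ya _]]]]].
    destruct (LH_coords L a0 b0 c0 Y Hnf0 Ta0 Tb0 Ec0' (conj LY TY0)) as [i2 [j2 [k2 [Xb [Yb _]]]]].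
    exists (i1 * j2 - j1 * i2)%Z.
    assert (E1 : ox X * oy Y - oy X * ox Y = (IZR i1 * IZR j2 - IZR j1 * IZR i2) * I0).
    { rewrite Xa, Ya, Xb, Yb. unfold I0. ring. }
    assert (E2 : ox X * oy Y - oy X * ox Y = (IZR s * (IZR u' * IZR p' + IZR v' * IZR q')) * (ox a * oy b - oy a * ox b)).
    { rewrite X1, X2, Y1, Y2, Ec, d1, d2, !mult_IZR, !opp_IZR. simpl. ring. }
    rewrite HuvR, Rmult_1_r in E2. rewrite <- E2, E1, minus_IZR, !mult_IZR. reflexivity. }
  assert (HN : exists N : Z, IZR s * (ox a * oy b - oy a * ox b) = IZR N * I0).
  { destruct (Z.eq_dec p 0) as [Hp0 | Hp0]; [destruct (Z.eq_dec q 0) as [Hq0 | Hq0]|].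
    - subst p q.
      assert (LHa : LH L a) by (split; auto; rewrite Hp; simpl; ring).
      assert (LHb : LH L b) by (split; auto; rewrite Hq; simpl; ring).
      destruct (LH_coords L a0 b0 c0 a Hnf0 Ta0 Tb0 Ec0' LHa) as [i1 [j1 [k1 [Xa [Ya _]]]]].
      destruct (LH_coords L a0 b0 c0 b Hnf0 Ta0 Tb0 Ec0' LHb) as [i2 [j2 [k2 [Xb [Yb _]]]]].
      exists (s * (i1 * j2 - j1 * i2))%Z. rewrite mult_IZR, minus_IZR, !mult_IZR.
      rewrite Xa, Ya, Xb, Yb. unfold I0. ring.
    - apply Gen. lia.
    - apply Gen. lia. }
  destruct HE as [E [HcE HE1]]. destruct HN as [N HN].
  destruct (pm1 I0 HI0) as [e0 [He0 _]].
  exists (N * e0)%Z. rewrite mult_IZR, <- He0, Rmult_assoc, <- HN, HIc, Hs, HcE.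
  destruct HE1 as [-> | ->]; field; repeat split; lra.
Qed.

Lemma case_T1 L r lam r0 :
  is_lattice L -> normalised L -> heis_index L r -> 0 < lam -> lam_hyp L lam -> has_type L (T1 r0) r ->
  exists g : osc, forall y,
    (exists x, L x /\ y = Fu (1 / (s0 (T1 r0) r * INR r * lam)) x) <->
    (exists x, L x /\ y = conjg g x).
Proof.
  intros Hlat Hn Hh Hlam Hl Ht.
  pose proof Hlat as [HL _]. pose proof HL as [H1 [H2 H3]].
  assert (CL : closed L) by (split; auto).
  destruct Hh as [Hr [a0 [b0 [c0 [Ha0 [Hb0 [Hc0 [_ [_ [Hcomm0 Hnf0]]]]]]]]]].
  assert (Hnf0' : forall x, LH L x -> exists p, x = hword a0 b0 c0 p).
  { intros x Hx. destruct (proj1 (Hnf0 x) Hx) as [p [Hp _]]. exists p; exact Hp. }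
  destruct (struct_G L a0 b0 c0 r Hn Hr Ha0 Hb0 Hc0 Hcomm0 Hnf0') as [HI0 Ec0].
  pose proof Ht as [Hr0 _]. cbn [type_index] in Hr0.
  destruct (nf_of_type L (T1 r0) r HL Ht)
    as [a [b [c [d [La [Lb [Lc [Ld [E1 [E2 [E3 [E4 [E5 [E6 [Hnf Huniq]]]]]]]]]]]]]]].
  cbn [type_index S_images fst snd] in E4, E5, E6.
  destruct Ha0 as [La0 Ta0]. destruct Hb0 as [Lb0 Tb0].
  assert (HI0nz : ox a0 * oy b0 - oy a0 * ox b0 <> 0) by (destruct HI0; lra).
  destruct (T1_geom L r0 a b c d a0 b0 HL La Lb Lc Ld La0 Lb0 Ta0 Tb0 HI0nz Hr0 E1 E2 E3 E4 E5 E6 Hnf)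
    as [Ra [Rb [Rd [d1 [d2 [Ec HIc]]]]]].
  set (cz := oz c) in *.
  assert (Hcz : cz <> 0).
  { intro E0. destruct (Huniq 0%Z 0%Z 1%Z 0%Z 0%Z 0%Z 0%Z 0%Z) as [_ [_ [H _]]]; [|discriminate].
    unfold hword. rewrite Ec, !ozpow_Zc, E0. f_equal. f_equal. f_equal. f_equal. ring. }
  destruct (lam_of L lam a Hl La) as [p Hp].
  destruct (lam_of L lam b Hl Lb) as [q Hq].
  destruct (lam_of L lam d Hl Ld) as [s Hs].
  destruct (T1_K L a b c d a0 b0 c0 r r0 lam p q s HL La Lb Lc Ld Hnf Ra Rb Rd d1 d2 Ec HIc Hcz Hr0 Hr
     Hnf0' (conj La0 Ta0) (conj Lb0 Tb0) Hc0 HI0 Ec0 Hlam Hp Hq Hs) as [K HK].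
  cbn [s0]. set (u := 1 / (INR r / INR r0 * INR r * lam)) in *.
  set (I := ox a * oy b - oy a * ox b) in *.
  assert (HInz : I <> 0).
  { rewrite HIc. assert (0 < INR r0) by (apply lt_0_INR; lia). apply Rmult_integral_contrapositive; split; lra. }
  set (A := u * ot a). set (B := u * ot b).
  exists (mkOsc ((B * ox a - A * ox b) / I) ((B * oy a - A * oy b) / I) 0 0).
  set (g := mkOsc ((B * ox a - A * ox b) / I) ((B * oy a - A * oy b) / I) 0 0).
  assert (Rc : rt c) by (rewrite Ec; apply rt_H; reflexivity).
  assert (Ga : conjg g a = Fu u a).
  { unfold g. rewrite conjg_eta_rt by exact Ra. rewrite Fu_shift. f_equal. fold A. unfold I. field. exact HInz. }
  assert (Gb : conjg g b = Fu u b).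
  { unfold g. rewrite conjg_eta_rt by exact Rb. rewrite Fu_shift. f_equal. fold B. unfold I. field. exact HInz. }
  assert (Gc : conjg g c = c).
  { unfold g. rewrite conjg_eta_rt by exact Rc. rewrite Ec. unfold shiftz, Zc; simpl. apply osc_eq; ring. }
  assert (Tc : ot c = 0) by (rewrite Ec; reflexivity).
  assert (Fc : Fu u c = c) by (apply Fu_H; exact Tc).
  assert (GZ : forall w, conjg g (shiftz d w) = shiftz d w).
  { intro w. unfold g. rewrite conjg_eta_rt by (destruct Rd; split; simpl; auto).
    unfold shiftz; simpl. rewrite d1, d2. apply osc_eq; ring. }
  apply (gen_lemma L a b c d g u HL Hnf).
  intros x [-> | [-> | [-> | ->]]]; split.
  - exists a; split; auto.
  - exists a; split; auto.
  - exists b; split; auto.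
  - exists b; split; auto.
  - exists c; split; auto. rewrite Gc, Fc; reflexivity.
  - exists c; split; auto. rewrite Gc, Fc; reflexivity.
  - exists (omul d (ozpow c (- K))). split.
    + apply H2; auto. apply closed_ozpow; auto.
    + pose proof (GZ 0) as G0. rewrite shiftz_0 in G0. rewrite G0.
      rewrite Ec, ozpow_Zc, omul_Zc_r, Fu_shift.
      change (ot (shiftz d (IZR (- K) * cz))) with (ot d). rewrite HK, shiftz_shiftz, opp_IZR.
      rewrite <- (shiftz_0 d) at 1. f_equal. unfold cz. ring.
  - exists (omul d (ozpow c K)). split.
    + apply H2; auto. apply closed_ozpow; auto.
    + rewrite Ec, ozpow_Zc, omul_Zc_r, GZ, Fu_shift, HK. reflexivity.
Qed.

Theorem lemma4p16 (L : osc -> Prop) (r : nat) (lam : R) (T : osc_type) :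
  is_lattice L -> normalised L ->
  heis_index L r ->
  0 < lam ->
  (forall t, (exists x, L x /\ ot x = t) <-> exists n : Z, t = IZR n * lam) ->
  has_type L T r ->
  exists g : osc, forall y,
    (exists x, L x /\ y = Fu (1 / (s0 T r * INR r * lam)) x) <->
    (exists x, L x /\ y = conjg g x).
Proof.
  intros Hlat Hn Hh Hlam Hl Ht.
  destruct T as [r0 | | | | | | |].
  - exact (case_T1 L r lam r0 Hlat Hn Hh Hlam Hl Ht).
  - apply (simple_case L r lam T2 Hlat Hn Hh Hlam Hl). reflexivity.
  - exact (case_T2p L r lam Hlat Hn Hlam Hl Ht).
  - apply (simple_case L r lam T3 Hlat Hn Hh Hlam Hl). reflexivity.
  - exact (case_T3p L r lam Hlat Hn Hlam Hl Ht).
  - destruct (Nat.eqb (Nat.modulo r 4) 2) eqn:E.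
    + exact (case_T4 L r lam Hlat Hn Hlam Hl Ht E).
    + apply (simple_case L r lam T4 Hlat Hn Hh Hlam Hl). unfold s0. rewrite E. reflexivity.
  - destruct (Nat.eqb (Nat.modulo r 4) 2) eqn:E.
    + apply (simple_case L r lam T4p Hlat Hn Hh Hlam Hl). unfold s0. rewrite E. reflexivity.
    + exact (case_T4p L r lam Hlat Hn Hlam Hl Ht E).
  - apply (simple_case L r lam T6 Hlat Hn Hh Hlam Hl). reflexivity.
Qed.
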